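(* The family $\mathcal{L}_0$ contains four chains $\mathcal{K}_0,\mathcal{K}_1,\mathcal{K}_2,\mathcal{K}_3$ (with respect to $\subset$), each of size $\mathfrak{c}$, such that for each $i\in\{0,1,2,3\}$ all spaces $(\mathbb{R},\tau)$ with $\tau\in\mathcal{K}_i$ are pairwise homeomorphic, and: (i) for $\tau\in\mathcal{K}_0$ the space $(\mathbb{R},\tau)$ is second countable but not regular; (ii) for $\tau\in\mathcal{K}_1$ the space $(\mathbb{R},\tau)$ is neither regular nor first countable; (iii) for $\tau\in\mathcal{K}_2$ the space $(\mathbb{R},\tau)$ is completely normal but not first countable; (iv) for $\tau\in\mathcal{K}_3$ the space $(\mathbb{R},\tau)$ is completely metrizable; (v) $\mathcal{K}_0\cup\mathcal{K}_1\cup\mathcal{K}_2$ is a chain and for every $i\in\{0,1,2\}$ the chain $\mathcal{K}_i$ is dense in $\mathcal{K}_0\cup\mathcal{K}_1\cup\mathcal{K}_2$; (vi) every topology in $\mathcal{K}_0\cup\mathcal{K}_1\cup\mathcal{K}_2$ is a subset of every topology in $\mathcal{K}_3$.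
   Context: $\mathfrak{c}=|\mathbb{R}|$. $\eta$ denotes the Euclidean topology on $\mathbb{R}$. $\mathcal{L}$ denotes the family of all Hausdorff topologies $\tau$ on $\mathbb{R}$ with $\tau\subset\eta$. For $\tau\in\mathcal{L}$ and $a\in\mathbb{R}$ let $\mathcal{N}_\tau(a)$ be the neighborhood filter of $a$ in $(\mathbb{R},\tau)$; let $C(\tau)$ be the set of all $a\in\mathbb{R}$ with $\mathcal{N}_\tau(a)\neq\mathcal{N}_\eta(a)$. $\mathcal{L}_0:=\{\tau\in\mathcal{L}\mid C(\tau)\subset\{0\}\}$. A chain is a family of topologies totally ordered by inclusion. If $\mathcal{K}'\subset\mathcal{K}$ are chains, $\mathcal{K}'$ is dense in $\mathcal{K}$ if for every $X,Y\in\mathcal{K}$ with $X\subsetneq Y$ there is $Z\in\mathcal{K}'\setminus\{X,Y\}$ with $X\subset Z\subset Y$. *)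

(* Defs.v *)
From Stdlib Require Import Reals.
Open Scope R_scope.

Definition subset (A B : R -> Prop) : Prop := forall x, A x -> B x.
Definition topo := (R -> Prop) -> Prop.
Definition tsub (t1 t2 : topo) : Prop := forall U, t1 U -> t2 U.

Definition is_topology (tau : topo) : Prop :=
  tau (fun _ => False) /\ tau (fun _ => True) /\
  (forall U V, tau U -> tau V -> tau (fun x => U x /\ V x)) /\
  (forall F : (R -> Prop) -> Prop, (forall U, F U -> tau U) ->
     tau (fun x => exists U, F U /\ U x)).

Definition hausdorff (tau : topo) : Prop :=
  forall x y, x <> y -> exists U V, tau U /\ tau V /\ U x /\ V y /\
     (forall z, U z -> V z -> False).

Definition eta : topo := fun U =>
  forall x, U x -> exists e, 0 < e /\ (forall y, Rabs (y - x) < e -> U y).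

Definition in_L (tau : topo) : Prop :=
  is_topology tau /\ hausdorff tau /\ tsub tau eta.

Definition nbhd_filter (tau : topo) (a : R) : (R -> Prop) -> Prop :=
  fun A => exists U, tau U /\ U a /\ subset U A.

Definition C_set (tau : topo) (a : R) : Prop :=
  nbhd_filter tau a <> nbhd_filter eta a.

Definition in_L0 (tau : topo) : Prop :=
  in_L tau /\ (forall a, C_set tau a -> a = 0).

Definition chain (K : topo -> Prop) : Prop :=
  forall X Y, K X -> K Y -> tsub X Y \/ tsub Y X.

Definition dense_in (K' K : topo -> Prop) : Prop :=
  forall X Y, K X -> K Y -> tsub X Y -> X <> Y ->
    exists Z, K' Z /\ Z <> X /\ Z <> Y /\ tsub X Z /\ tsub Z Y.

Definition card_c (K : topo -> Prop) : Prop :=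
  exists f : R -> topo, (forall r, K (f r)) /\
    (forall r s, f r = f s -> r = s) /\
    (forall t, K t -> exists r, f r = t).

Definition homeomorphic (t1 t2 : topo) : Prop :=
  exists f : R -> R, (forall x y, f x = f y -> x = y) /\
    (forall y, exists x, f x = y) /\
    (forall U, t2 U <-> t1 (fun x => U (f x))).

Definition second_countable (tau : topo) : Prop :=
  exists b : nat -> R -> Prop, (forall n, tau (b n)) /\
    (forall U x, tau U -> U x -> exists n, b n x /\ subset (b n) U).

Definition first_countable (tau : topo) : Prop :=
  forall x, exists b : nat -> R -> Prop, (forall n, tau (b n) /\ b n x) /\
    (forall U, tau U -> U x -> exists n, subset (b n) U).

Definition closed_in (tau : topo) (F : R -> Prop) : Prop :=
  tau (fun x => ~ F x).

Definition regular (tau : topo) : Prop :=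
  forall F x, closed_in tau F -> ~ F x ->
    exists U V, tau U /\ tau V /\ U x /\ subset F V /\
      (forall z, U z -> V z -> False).

Definition closure (tau : topo) (A : R -> Prop) : R -> Prop :=
  fun x => forall U, tau U -> U x -> exists y, U y /\ A y.

Definition completely_normal (tau : topo) : Prop :=
  forall A B : R -> Prop,
    (forall x, closure tau A x -> B x -> False) ->
    (forall x, A x -> closure tau B x -> False) ->
    exists U V, tau U /\ tau V /\ subset A U /\ subset B V /\
      (forall z, U z -> V z -> False).

Definition is_metric (d : R -> R -> R) : Prop :=
  (forall x y, 0 <= d x y) /\ (forall x y, d x y = 0 <-> x = y) /\
  (forall x y, d x y = d y x) /\ (forall x y z, d x z <= d x y + d y z).

Definition metric_topology (d : R -> R -> R) : topo := fun U =>
  forall x, U x -> exists e, 0 < e /\ (forall y, d x y < e -> U y).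

Definition metric_complete (d : R -> R -> R) : Prop :=
  forall u : nat -> R,
    (forall e, 0 < e -> exists N, forall m n, (N <= m)%nat -> (N <= n)%nat ->
        d (u m) (u n) < e) ->
    exists l, forall e, 0 < e -> exists N, forall n, (N <= n)%nat -> d (u n) l < e.

Definition completely_metrizable (tau : topo) : Prop :=
  exists d, is_metric d /\ metric_complete d /\
    (forall U, tau U <-> metric_topology d U).

Definition union3 (K0 K1 K2 : topo -> Prop) : topo -> Prop :=
  fun t => K0 t \/ K1 t \/ K2 t.

(* Main.v *)
Require Import Defs.
From Stdlib Require Import Reals Lra Lia ZArith Classical ClassicalEpsilon FunctionalExtensionality PropExtensionality.
From Stdlib Require Import Arith.Cantor.
Open Scope R_scope.

Definition fl (x : R) : Z := (up x - 1)%Z.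

Lemma fl_spec x : IZR (fl x) <= x /\ x < IZR (fl x) + 1.
Proof.
  unfold fl. destruct (archimed x) as [H1 H2]. rewrite minus_IZR. simpl. lra.
Qed.

Lemma fl_unique x k : IZR k <= x -> x < IZR k + 1 -> fl x = k.
Proof.
  intros H1 H2. unfold fl.
  assert (E : (k + 1)%Z = up x). { apply tech_up; rewrite plus_IZR; simpl; lra. }
  lia.
Qed.

Lemma IZR_lt_plus1 (m n : Z) : IZR m < IZR n + 1 -> (m <= n)%Z.
Proof. intro H. assert (IZR m < IZR (n+1)) by (rewrite plus_IZR; simpl; lra).
  apply lt_IZR in H0. lia. Qed.

Lemma IZR_gt_minus1 (m n : Z) : IZR n - 1 < IZR m -> (n <= m)%Z.
Proof. intro H. assert (IZR (n-1) < IZR m) by (rewrite minus_IZR; simpl; lra).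
  apply lt_IZR in H0. lia. Qed.

Definition tau_of (nb : (R -> Prop) -> Prop) : topo :=
  fun U => eta U /\ (U 0 -> nb U).

Definition nb_good (nb : (R -> Prop) -> Prop) : Prop :=
  nb (fun _ => True) /\ (forall U V, nb U -> nb V -> nb (fun x => U x /\ V x)) /\
  (forall U V : R -> Prop, nb U -> (forall x, U x -> V x) -> nb V).

Lemma eta_ball a r : eta (fun x => Rabs (x - a) < r).
Proof.
  intros x Hx. exists (r - Rabs (x - a)). split. lra.
  intros y Hy. assert (Rabs (y - a) <= Rabs (y - x) + Rabs (x - a)).
  { replace (y - a) with ((y - x) + (x - a)) by ring. apply Rabs_triang. }
  lra.
Qed.

Lemma eta_inter U V : eta U -> eta V -> eta (fun x => U x /\ V x).
Proof.
  intros HU HV x [Ux Vx]. destruct (HU x Ux) as [e1 [He1 H1]].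
  destruct (HV x Vx) as [e2 [He2 H2]]. exists (Rmin e1 e2). split.
  apply Rmin_pos; auto. intros y Hy. split.
  apply H1. pose proof (Rmin_l e1 e2). lra.
  apply H2. pose proof (Rmin_r e1 e2). lra.
Qed.

Lemma tau_of_topology nb : nb_good nb -> is_topology (tau_of nb).
Proof.
  intros [HT [HI HU]]. split; [|split; [|split]].
  - split. intros x []. intros [].
  - split. intros x _. exists 1. split. lra. auto. auto.
  - intros U V [eU nU] [eV nV]. split. apply eta_inter; auto.
    intros [U0 V0]. apply HI; auto.
  - intros F HF. split.
    + intros x [U [FU Ux]]. destruct (HF U FU) as [eU _].
      destruct (eU x Ux) as [e [He H]]. exists e. split; auto.
      intros y Hy. exists U. split; auto.
    + intros [U [FU U0]]. destruct (HF U FU) as [_ nU].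
      apply (HU U). apply nU; auto. intros x Ux. exists U. auto.
Qed.

Definition nb_sep (nb : (R -> Prop) -> Prop) : Prop :=
  forall y, y <> 0 -> exists W r, tau_of nb W /\ W 0 /\ 0 < r /\
     forall x, W x -> r <= Rabs (x - y).

Lemma ball_open nb y s : s <= Rabs y -> tau_of nb (fun x => Rabs (x - y) < s).
Proof.
  intro Hs. split. apply eta_ball. intro H. exfalso.
  rewrite Rminus_0_l, Rabs_Ropp in H. lra.
Qed.

Lemma tau_of_sub nb : tsub (tau_of nb) eta.
Proof. intros U [H _]. exact H. Qed.

Lemma tau_of_L0 nb : nb_good nb -> nb_sep nb -> in_L0 (tau_of nb).
Proof.
  intros Hg Hs. split; [split; [|split]|].
  - apply tau_of_topology; auto.
  - intros x y Hxy.
    destruct (Req_dec x 0) as [Hx|Hx].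
    + subst x. destruct (Hs y (not_eq_sym Hxy)) as [W [r [HW [W0 [Hr HWr]]]]].
      exists W, (fun z => Rabs (z - y) < Rmin r (Rabs y)).
      split; auto. split. apply ball_open. apply Rmin_r.
      split; auto. split. rewrite Rminus_diag, Rabs_R0. apply Rmin_pos; auto.
      apply Rabs_pos_lt; auto.
      intros z Wz Bz. pose proof (HWr z Wz). pose proof (Rmin_l r (Rabs y)). lra.
    + destruct (Req_dec y 0) as [Hy|Hy].
      * subst y. destruct (Hs x Hx) as [W [r [HW [W0 [Hr HWr]]]]].
        exists (fun z => Rabs (z - x) < Rmin r (Rabs x)), W.
        split. apply ball_open. apply Rmin_r. split; auto.
        split. rewrite Rminus_diag, Rabs_R0. apply Rmin_pos; auto.
        apply Rabs_pos_lt; auto. split; auto.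
        intros z Bz Wz. pose proof (HWr z Wz). pose proof (Rmin_l r (Rabs x)). lra.
      * set (s := Rmin (Rabs (x - y) / 2) (Rmin (Rabs x) (Rabs y))).
        assert (Hxy' : 0 < Rabs (x - y)) by (apply Rabs_pos_lt; lra).
        assert (Hs0 : 0 < s). { unfold s. apply Rmin_pos. lra. apply Rmin_pos; apply Rabs_pos_lt; auto. }
        assert (s <= Rabs (x-y)/2) by apply Rmin_l.
        assert (s <= Rabs x) by (unfold s; eapply Rle_trans; [apply Rmin_r|apply Rmin_l]).
        assert (s <= Rabs y) by (unfold s; eapply Rle_trans; [apply Rmin_r|apply Rmin_r]).
        exists (fun z => Rabs (z - x) < s), (fun z => Rabs (z - y) < s).
        split. apply ball_open; auto. split. apply ball_open; auto.
        split. rewrite Rminus_diag, Rabs_R0. auto. split. rewrite Rminus_diag, Rabs_R0. auto.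
        intros z Hz1 Hz2.
        assert (Rabs (x - y) <= Rabs (z - x) + Rabs (z - y)).
        { replace (x - y) with (-(z - x) + (z - y)) by ring.
          eapply Rle_trans. apply Rabs_triang. rewrite Rabs_Ropp. lra. }
        lra.
  - apply tau_of_sub.
  - intros a Ha. apply NNPP. intro Ha0. apply Ha.
    apply functional_extensionality. intro A. apply propositional_extensionality.
    split.
    + intros [U [HU [Ua HA]]]. exists U. split; auto. apply HU.
    + intros [U [HU [Ua HA]]].
      exists (fun x => U x /\ Rabs (x - a) < Rabs a). split.
      * split. apply eta_inter; auto. apply eta_ball.
        intros [_ H]. rewrite Rminus_0_l, Rabs_Ropp in H. lra.
      * split. split; auto. rewrite Rminus_diag, Rabs_R0. apply Rabs_pos_lt; auto.
        intros x [Ux _]. auto.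
Qed.

Definition wd (ty : nat) (e d : R) : R :=
  match ty with O => 0 | S (S (S O)) => e | _ => d end.

Definition Bas (ty : nat) (c : Z -> R) (e : R) (N : Z) (dl : Z -> R) (x : R) : Prop :=
  Rabs x < e \/ exists n : Z, (N <= n)%Z /\ IZR n - e < x /\
      x < IZR n + c n + wd ty e (dl n) /\ (ty = 1%nat -> x <> IZR n + c n).

Definition okp (e : R) (N : Z) (dl : Z -> R) : Prop :=
  0 < e /\ e <= 1/8 /\ (1 <= N)%Z /\ forall n, 0 < dl n /\ dl n <= 1/16.

Definition nbT ty c (U : R -> Prop) : Prop :=
  exists e N dl, okp e N dl /\ forall x, Bas ty c e N dl x -> U x.

Definition Tt ty c : topo := tau_of (nbT ty c).

Lemma wd_nonneg ty e d : 0 < e -> 0 < d -> 0 <= wd ty e d.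
Proof. intros. destruct ty as [|[|[|[|]]]]; simpl; lra. Qed.
Lemma wd_le ty e d : e <= 1/8 -> d <= 1/16 -> wd ty e d <= 1/8.
Proof. intros. destruct ty as [|[|[|[|]]]]; simpl; lra. Qed.
Lemma wd_mono ty e d e' d' : e' <= e -> d' <= d -> wd ty e' d' <= wd ty e d.
Proof. intros. destruct ty as [|[|[|[|]]]]; simpl; lra. Qed.
Lemma wd_le_d ty e d : ty <> 3%nat -> 0 < d -> wd ty e d <= d.
Proof. intros. destruct ty as [|[|[|[|]]]]; simpl; try lra. congruence. Qed.

Lemma Bas_mono ty c e N dl e' N' dl' : e' <= e -> (N <= N')%Z ->
  (forall n, dl' n <= dl n) -> forall x, Bas ty c e' N' dl' x -> Bas ty c e N dl x.
Proof.
  intros He HN Hd x [H|[n [Hn [H1 [H2 H3]]]]].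
  - left. lra.
  - right. exists n. split. lia. split. lra. split; auto.
    pose proof (wd_mono ty e (dl n) e' (dl' n) He (Hd n)). lra.
Qed.

Lemma okp_std : okp (1/8) 1 (fun _ => 1/16).
Proof. repeat split; try lra; lia. Qed.

Lemma nbT_good ty c : nb_good (nbT ty c).
Proof.
  split; [|split].
  - exists (1/8), 1%Z, (fun _ => 1/16). split. apply okp_std. auto.
  - intros U V [e1 [N1 [d1 [[He1 [He1' [HN1 Hd1]]] H1]]]] [e2 [N2 [d2 [[He2 [He2' [HN2 Hd2]]] H2]]]].
    exists (Rmin e1 e2), (Z.max N1 N2), (fun n => Rmin (d1 n) (d2 n)).
    split. split; [|split; [|split]].
    + apply Rmin_pos; auto.
    + pose proof (Rmin_l e1 e2). lra.
    + lia.
    + intro n. split. apply Rmin_pos; [apply Hd1|apply Hd2].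
      pose proof (Rmin_l (d1 n) (d2 n)). pose proof (proj2 (Hd1 n)). lra.
    + intros x Hx. split.
      * apply H1. eapply Bas_mono; [| |intros n; apply Rmin_l|exact Hx]. apply Rmin_l. lia.
      * apply H2. eapply Bas_mono; [| |intros n; apply Rmin_r|exact Hx]. apply Rmin_r. lia.
  - intros U V [e [N [d [Hp H]]]] HUV. exists e, N, d. split; auto.
Qed.

Lemma Bas_eta ty c e N dl : eta (Bas ty c e N dl).
Proof.
  intros x [H|[n [Hn [H1 [H2 H3]]]]].
  - exists (e - Rabs x). split. lra. intros y Hy. left.
    assert (Rabs y <= Rabs (y - x) + Rabs x).
    { replace y with ((y - x) + x) at 1 by ring. apply Rabs_triang. } lra.
  - destruct (Nat.eq_dec ty 1) as [E|E].
    + assert (Hne : x <> IZR n + c n) by auto.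
      assert (0 < Rabs (x - (IZR n + c n))) by (apply Rabs_pos_lt; lra).
      exists (Rmin (x - (IZR n - e)) (Rmin (IZR n + c n + wd ty e (dl n) - x) (Rabs (x - (IZR n + c n))))).
      split. repeat apply Rmin_pos; lra.
      intros y Hy. right. exists n. split; auto.
      pose proof (Rmin_l (x - (IZR n - e)) (Rmin (IZR n + c n + wd ty e (dl n) - x) (Rabs (x - (IZR n + c n))))).
      pose proof (Rmin_r (x - (IZR n - e)) (Rmin (IZR n + c n + wd ty e (dl n) - x) (Rabs (x - (IZR n + c n))))).
      pose proof (Rmin_l (IZR n + c n + wd ty e (dl n) - x) (Rabs (x - (IZR n + c n)))).
      pose proof (Rmin_r (IZR n + c n + wd ty e (dl n) - x) (Rabs (x - (IZR n + c n)))).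
      pose proof Hy as Hy0.
      apply Rabs_def2 in Hy. destruct Hy.
      split. lra. split. lra. intros _ Hyc. subst y.
      rewrite Rabs_minus_sym in Hy0. lra.
    + exists (Rmin (x - (IZR n - e)) (IZR n + c n + wd ty e (dl n) - x)).
      split. apply Rmin_pos; lra.
      intros y Hy. right. exists n. split; auto.
      pose proof (Rmin_l (x - (IZR n - e)) (IZR n + c n + wd ty e (dl n) - x)).
      pose proof (Rmin_r (x - (IZR n - e)) (IZR n + c n + wd ty e (dl n) - x)).
      apply Rabs_def2 in Hy. destruct Hy.
      split. lra. split. lra. intro. congruence.
Qed.

Lemma Bas_zero ty c e N dl : 0 < e -> Bas ty c e N dl 0.
Proof. intro. left. rewrite Rabs_R0. auto. Qed.

Lemma Bas_open ty c e N dl : okp e N dl -> Tt ty c (Bas ty c e N dl).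
Proof.
  intro Hp. split. apply Bas_eta. intros _. exists e, N, dl. split; auto.
Qed.

Lemma nbT_sep ty c : nb_sep (nbT ty c).
Proof.
  intros y Hy.
  assert (Hy0 : 0 < Rabs y) by (apply Rabs_pos_lt; auto).
  set (e := Rmin (1/8) (Rabs y / 2)).
  set (N := Z.max 1 (fl (Rabs y) + 2)).
  assert (He : 0 < e) by (apply Rmin_pos; lra).
  assert (He1 : e <= 1/8) by apply Rmin_l.
  assert (He2 : e <= Rabs y / 2) by apply Rmin_r.
  assert (Hp : okp e N (fun _ => 1/16)). { repeat split; try lra. unfold N; lia. }
  exists (Bas ty c e N (fun _ => 1/16)), (Rmin (Rabs y / 2) (1/2)).
  split. apply Bas_open; auto. split. apply Bas_zero; auto.
  split. apply Rmin_pos; lra.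
  intros x [H|[n [Hn [H1 [H2 H3]]]]].
  - assert (Rabs y <= Rabs (x - y) + Rabs x).
    { replace y with (-(x - y) + x) at 1 by ring. eapply Rle_trans. apply Rabs_triang.
      rewrite Rabs_Ropp. lra. }
    pose proof (Rmin_l (Rabs y / 2) (1/2)). lra.
  - assert (IZR n >= IZR (fl (Rabs y) + 2)). { apply Rle_ge, IZR_le. unfold N in Hn. lia. }
    rewrite plus_IZR in H. pose proof (fl_spec (Rabs y)). simpl in H.
    pose proof (Rle_abs (x - y)). pose proof (Rle_abs y).
    pose proof (Rmin_r (Rabs y / 2) (1/2)). lra.
Qed.

Lemma Tt_L0 ty c : in_L0 (Tt ty c).
Proof. apply tau_of_L0. apply nbT_good. apply nbT_sep. Qed.

Lemma Tt_incl ty c ty' c' :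
  (forall e' N' dl', okp e' N' dl' -> exists e N dl, okp e N dl /\
      forall x, Bas ty c e N dl x -> Bas ty' c' e' N' dl' x) ->
  tsub (Tt ty' c') (Tt ty c).
Proof.
  intros H U [HU1 HU2]. split; auto. intro U0.
  destruct (HU2 U0) as [e' [N' [dl' [Hp HB]]]].
  destruct (H e' N' dl' Hp) as [e [N [dl [Hp2 HB2]]]].
  exists e, N, dl. split; auto.
Qed.

Lemma Tt_neq_gen ty c ty' c' :
  (exists e N dl, okp e N dl /\ forall e' N' dl', okp e' N' dl' ->
      exists x, Bas ty' c' e' N' dl' x /\ ~ Bas ty c e N dl x) ->
  Tt ty c <> Tt ty' c'.
Proof.
  intros [e [N [dl [Hp H]]]] E.
  assert (O : Tt ty' c' (Bas ty c e N dl)) by (rewrite <- E; apply Bas_open; auto).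
  destruct O as [_ O]. destruct (O (Bas_zero _ _ _ _ _ (proj1 Hp))) as [e' [N' [dl' [Hp' HB]]]].
  destruct (H e' N' dl' Hp') as [x [H1 H2]]. apply H2, HB, H1.
Qed.

Lemma Bas_block ty c e N dl x n : okp e N dl -> (forall m, 0 <= c m <= 3/4) ->
  1 <= x -> IZR n <= x -> x < IZR n + 7/8 ->
  Bas ty c e N dl x ->
  (N <= n)%Z /\ IZR n - e < x /\ x < IZR n + c n + wd ty e (dl n) /\ (ty = 1%nat -> x <> IZR n + c n).
Proof.
  intros [He [He' [HN Hd]]] Hc H1 H2 H3 [H|[m [Hm [G1 [G2 G3]]]]].
  - pose proof (Rle_abs x). lra.
  - pose proof (wd_le ty e (dl m) He' (proj2 (Hd m))). pose proof (Hc m).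
    assert (m = n).
    { assert (m <= n)%Z by (apply IZR_lt_plus1; lra).
      assert (n <= m)%Z by (apply IZR_gt_minus1; lra). lia. }
    subst m. auto.
Qed.

Definition dstar (c c' : Z -> R) (n : Z) : R :=
  if Rlt_dec (c n) (c' n) then Rmin (1/16) ((c' n - c n)/2) else 1/16.

Lemma dstar_spec c c' n : 0 < dstar c c' n /\ dstar c c' n <= 1/16 /\
  (c n < c' n -> dstar c c' n <= (c' n - c n)/2).
Proof.
  unfold dstar. destruct (Rlt_dec (c n) (c' n)).
  - split. apply Rmin_pos; lra. split. apply Rmin_l. intros _. apply Rmin_r.
  - split. lra. split. lra. intro; contradiction.
Qed.

Lemma Tt_incl_lt ty c ty' c' : ty <> 3%nat ->
  (exists N0, forall n, (N0 <= n)%Z -> c n < c' n) -> tsub (Tt ty' c') (Tt ty c).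
Proof.
  intros Hty [N0 HN0]. apply Tt_incl. intros e' N' dl' [He [He' [HN Hd]]].
  exists e', (Z.max N' N0), (dstar c c').
  split. repeat split; try lra; try lia; apply dstar_spec.
  intros x [H|[n [Hn [H1 [H2 H3]]]]].
  - left. auto.
  - right. exists n. assert (Hlt : c n < c' n) by (apply HN0; lia).
    destruct (dstar_spec c c' n) as [D1 [D2 D3]]. specialize (D3 Hlt).
    pose proof (wd_le_d ty e' (dstar c c' n) Hty D1).
    pose proof (wd_nonneg ty' e' (dl' n) He (proj1 (Hd n))).
    split. lia. split. lra. split. lra. intros _. lra.
Qed.

Lemma Tt_neq_lt ty c ty' c' : ty <> 3%nat -> (forall m, 1/4 <= c m <= 3/4) ->
  (forall m, c' m <= 3/4) ->
  (exists N0, forall n, (N0 <= n)%Z -> c n < c' n) -> Tt ty c <> Tt ty' c'.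
Proof.
  intros Hty Hc Hc' [N0 HN0]. apply Tt_neq_gen.
  exists (1/8), 1%Z, (dstar c c'). split. repeat split; try lra; try lia; apply dstar_spec.
  intros e' N' dl' [He [He' [HN Hd]]].
  set (n := Z.max (Z.max N' N0) 1).
  assert (Hlt : c n < c' n) by (apply HN0; unfold n; lia).
  assert (Hn1 : 1 <= IZR n) by (apply IZR_le; unfold n; lia).
  pose proof (Hc n). pose proof (Hc' n).
  exists (IZR n + (c n + c' n)/2). split.
  - right. exists n. split. unfold n; lia.
    pose proof (wd_nonneg ty' e' (dl' n) He (proj1 (Hd n))).
    split. lra. split. lra. intros _. lra.
  - intro HB. apply Bas_block with (n := n) in HB.
    + destruct HB as [_ [_ [HB _]]].
      destruct (dstar_spec c c' n) as [D1 [D2 D3]]. specialize (D3 Hlt).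
      pose proof (wd_le_d ty (1/8) (dstar c c' n) Hty D1). lra.
    + repeat split; try lra; try lia; apply dstar_spec.
    + intro m. pose proof (Hc m). lra.
    + lra.
    + lra.
    + lra.
Qed.

Definition ct (t : R) : Z -> R := fun _ => t.

Lemma T3_finer ty c t : ty <> 3%nat -> (forall m, 1/4 <= c m) -> 0 < t <= 1/16 ->
  tsub (Tt ty c) (Tt 3 (ct t)).
Proof.
  intros Hty Hc Ht. apply Tt_incl. intros e' N' dl' [He [He' [HN Hd]]].
  exists (Rmin e' (1/16)), N', (fun _ => 1/16). split.
  - repeat split; try lia; try lra. apply Rmin_pos; lra. pose proof (Rmin_r e' (1/16)). lra.
  - pose proof (Rmin_l e' (1/16)) as Hm1. pose proof (Rmin_r e' (1/16)) as Hm2.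
    intros x [H|[n [Hn [H1 [H2 H3]]]]].
    + left. lra.
    + right. exists n. simpl in H2. unfold ct in H2. pose proof (Hc n).
      pose proof (wd_nonneg ty e' (dl' n) He (proj1 (Hd n))).
      split; auto. split. lra. split. lra. intros _. lra.
Qed.

Lemma T3_mono t t' : t <= t' -> tsub (Tt 3 (ct t')) (Tt 3 (ct t)).
Proof.
  intro Ht. apply Tt_incl. intros e' N' dl' Hp. exists e', N', dl'. split; auto.
  intros x [H|[n [Hn [H1 [H2 H3]]]]]. left; auto.
  right. exists n. simpl in *. unfold ct in *. split; auto. split. lra. split. lra.
  intro; discriminate.
Qed.

Lemma T3_neq t t' : 0 < t -> t < t' -> t' <= 1/16 -> Tt 3 (ct t) <> Tt 3 (ct t').
Proof.
  intros Ht Htt Ht'. apply Tt_neq_gen.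
  set (e := Rmin (1/8) (t' - t)).
  assert (He : 0 < e) by (apply Rmin_pos; lra).
  assert (He1 : e <= 1/8) by apply Rmin_l. assert (He2 : e <= t' - t) by apply Rmin_r.
  exists e, 1%Z, (fun _ => 1/16). split. repeat split; try lra; lia.
  intros e' N' dl' [He' [He'' [HN Hd]]].
  set (n := Z.max N' 1).
  assert (Hn1 : 1 <= IZR n) by (apply IZR_le; unfold n; lia).
  exists (IZR n + t + e). split.
  - right. exists n. simpl. unfold ct. split. unfold n; lia. split. lra. split. lra.
    intro; discriminate.
  - intro HB. apply Bas_block with (n := n) in HB.
    + destruct HB as [_ [_ [HB _]]]. simpl in HB. unfold ct in HB. lra.
    + repeat split; try lra; lia.
    + intro m. unfold ct. lra.
    + lra.
    + lra.
    + lra.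
Qed.


Lemma mdiv_le0 a b : 0 <= a -> 0 < b -> 0 <= a / b.
Proof. intros. unfold Rdiv. apply Rmult_le_pos. auto. left. apply Rinv_0_lt_compat. auto. Qed.
Lemma mdiv_lt_l a b c : 0 < b -> a < c * b -> a / b < c.
Proof. intros Hb H. assert (E : a / b * b = a) by (field; lra). nra. Qed.
Lemma mdiv_lt_r a b c : 0 < b -> c * b < a -> c < a / b.
Proof. intros Hb H. assert (E : a / b * b = a) by (field; lra). nra. Qed.

Definition cseq (a d : R) (n : Z) : R := a + d / (8 * (Rabs d + Rabs (IZR n) + 1)).

Lemma frac_bound d K : 1 <= K -> - Rabs d / (8 * K) <= d / (8 * (Rabs d + K)) <= Rabs d / (8 * K)
  /\ -1/8 < d / (8 * (Rabs d + K)) < 1/8.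
Proof.
  intro HK. pose proof (Rabs_pos d) as Ha.
  replace (- Rabs d / (8 * K)) with (- (Rabs d / (8 * K))) by (field; lra).
  assert (Hq : d / (8 * (Rabs d + K)) * (8 * (Rabs d + K)) = d) by (field; lra).
  assert (Hr : Rabs d / (8 * K) * (8 * K) = Rabs d) by (field; lra).
  generalize dependent (d / (8 * (Rabs d + K))). intros q Hq.
  generalize dependent (Rabs d / (8 * K)). intros r Hr.
  assert (0 <= r) by nra.
  destruct (Rle_dec 0 d).
  - rewrite Rabs_pos_eq in * by auto.
    assert (0 <= q) by nra.
    split; [split|split]; nra.
  - rewrite Rabs_left in * by lra.
    assert (q <= 0) by nra.
    split; [split|split]; nra.
Qed.

Lemma cseq_bounds a d n : 3/8 <= a <= 5/8 -> 1/4 <= cseq a d n <= 3/4.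
Proof.
  intro Ha. unfold cseq. pose proof (Rabs_pos (IZR n)).
  replace (Rabs d + Rabs (IZR n) + 1) with (Rabs d + (Rabs (IZR n) + 1)) by ring.
  destruct (frac_bound d (Rabs (IZR n) + 1)) as [_ [H1 H2]]. lra. lra.
Qed.

Lemma cseq_lt_d a d d' : d < d' -> forall n, cseq a d n < cseq a d' n.
Proof.
  intros Hd n. unfold cseq. pose proof (Rabs_pos (IZR n)). set (K := Rabs (IZR n) + 1).
  replace (Rabs d + Rabs (IZR n) + 1) with (Rabs d + K) by (unfold K; ring).
  replace (Rabs d' + Rabs (IZR n) + 1) with (Rabs d' + K) by (unfold K; ring).
  assert (HK : 1 <= K) by (unfold K; lra).
  pose proof (Rabs_pos d). pose proof (Rabs_pos d').
  assert (E : d' / (8 * (Rabs d' + K)) - d / (8 * (Rabs d + K)) =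
     (d' * (Rabs d + K) - d * (Rabs d' + K)) / (8 * ((Rabs d + K) * (Rabs d' + K)))) by (field; lra).
  assert (0 < d' * (Rabs d + K) - d * (Rabs d' + K)).
  { destruct (Rle_dec 0 d); destruct (Rle_dec 0 d').
    - rewrite (Rabs_pos_eq d), (Rabs_pos_eq d') by auto. nra.
    - lra.
    - rewrite (Rabs_left d), (Rabs_pos_eq d') by lra. nra.
    - rewrite (Rabs_left d), (Rabs_left d') by lra. nra. }
  assert (0 < (d' * (Rabs d + K) - d * (Rabs d' + K)) / (8 * ((Rabs d + K) * (Rabs d' + K)))).
  { apply Rdiv_lt_0_compat; auto. nra. }
  lra.
Qed.

Lemma cseq_lt_a a d a' d' : a < a' ->
  exists N0, forall n, (N0 <= n)%Z -> cseq a d n < cseq a' d' n.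
Proof.
  intro Ha. set (X := (Rabs d + Rabs d') / (8 * (a' - a))).
  exists (Z.max 0 (up X)). intros n Hn.
  assert (HX : X < Rabs (IZR n) + 1).
  { destruct (archimed X) as [A1 _]. assert (IZR (up X) <= IZR n) by (apply IZR_le; lia).
    assert (0 <= IZR n) by (apply IZR_le; lia). rewrite Rabs_pos_eq by lra. lra. }
  unfold cseq. pose proof (Rabs_pos (IZR n)). set (K := Rabs (IZR n) + 1) in *.
  replace (Rabs d + Rabs (IZR n) + 1) with (Rabs d + K) by (unfold K; ring).
  replace (Rabs d' + Rabs (IZR n) + 1) with (Rabs d' + K) by (unfold K; ring).
  assert (HK : 1 <= K) by (unfold K; lra).
  destruct (frac_bound d K HK) as [[_ B1] _]. destruct (frac_bound d' K HK) as [[B2 _] _].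
  assert (Rabs d / (8 * K) + Rabs d' / (8 * K) < a' - a).
  { replace (Rabs d / (8 * K) + Rabs d' / (8 * K)) with ((Rabs d + Rabs d') / (8 * K)) by (field; lra).
    unfold X in HX. apply mdiv_lt_l. lra.
    assert (Hp : 0 < 8 * (a' - a)) by lra.
    assert ((Rabs d + Rabs d') / (8 * (a' - a)) * (8 * (a' - a)) = Rabs d + Rabs d') by (field; lra).
    nra. }
  replace (- Rabs d' / (8 * K)) with (- (Rabs d' / (8 * K))) in B2 by (field; lra).
  lra.
Qed.

Fixpoint v2 (p : positive) : nat := match p with xO q => S (v2 q) | _ => O end.
Fixpoint od (p : positive) : positive := match p with xO q => od q | _ => p end.
Definition shl (p : positive) (k : nat) : positive := Nat.iter k xO p.
Definition isodd (p : positive) : Prop := match p with xO _ => False | _ => True end.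

Lemma shl_od p : shl (od p) (v2 p) = p.
Proof. induction p; simpl; auto. unfold shl in *. simpl. rewrite IHp. auto. Qed.

Lemma od_odd p : isodd (od p).
Proof. induction p; simpl; auto. Qed.

Lemma v2_shl o k : isodd o -> v2 (shl o k) = k /\ od (shl o k) = o.
Proof.
  intro Ho. induction k; simpl.
  - destruct o; simpl in *; auto; contradiction.
  - unfold shl in *. simpl. destruct IHk as [A B]. rewrite A, B. auto.
Qed.

Lemma IZR_shl o k : IZR (Zpos (shl o k)) = IZR (Zpos o) * 2 ^ k.
Proof.
  induction k; simpl. ring. unfold shl in *. simpl.
  rewrite Pos2Z.inj_xO, mult_IZR, IHk. simpl. ring.
Qed.

Definition Eo (i : nat) (p : positive) : R := IZR (Zpos (od p)) / 2 ^ (3 * v2 p + i).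

Lemma Eo_pos i p : 0 < Eo i p.
Proof. unfold Eo. apply Rdiv_lt_0_compat. apply IZR_lt. lia. apply pow_lt. lra. Qed.

Lemma Eo_inj i i' p p' : (i < 3)%nat -> (i' < 3)%nat -> Eo i p = Eo i' p' -> i = i' /\ p = p'.
Proof.
  intros Hi Hi' E. unfold Eo in E.
  assert (H2 : forall k, 0 < 2 ^ k) by (intro; apply pow_lt; lra).
  assert (E2 : IZR (Zpos (od p)) * 2 ^ (3 * v2 p' + i') = IZR (Zpos (od p')) * 2 ^ (3 * v2 p + i)).
  { pose proof (H2 (3 * v2 p + i)%nat). pose proof (H2 (3 * v2 p' + i')%nat).
    remember (2 ^ (3 * v2 p + i)) as A. remember (2 ^ (3 * v2 p' + i')) as B.
    remember (IZR (Z.pos (od p))) as o. remember (IZR (Z.pos (od p'))) as o'.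
    assert (E1 : o / A * A = o) by (field; lra).
    assert (E2 : o' / B * B = o') by (field; lra).
    rewrite E in E1. rewrite <- E1, <- E2 at 1. field; lra. }
  rewrite <- !IZR_shl in E2. apply eq_IZR in E2.
  assert (E3 : shl (od p) (3 * v2 p' + i') = shl (od p') (3 * v2 p + i)) by (injection E2; auto).
  pose proof (v2_shl (od p) (3 * v2 p' + i') (od_odd p)) as [A1 B1].
  pose proof (v2_shl (od p') (3 * v2 p + i) (od_odd p')) as [A2 B2].
  rewrite E3 in A1, B1. rewrite A1 in A2. rewrite B1 in B2.
  assert (v2 p = v2 p' /\ i = i') as [V I] by lia.
  split; auto. rewrite <- (shl_od p), <- (shl_od p'). rewrite B2, V. auto.
Qed.

Definition Dk (i : nat) (z : Z) : R :=
  match z with Z0 => Eo i 1 | Zpos p => Eo i (Pos.succ p) | Zneg p => - Eo i p end.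

Lemma Dk_inj i i' z z' : (i < 3)%nat -> (i' < 3)%nat -> Dk i z = Dk i' z' -> i = i' /\ z = z'.
Proof.
  intros Hi Hi' E.
  destruct z as [|p|p]; destruct z' as [|p'|p']; simpl in E;
    try (pose proof (Eo_pos i' p'); pose proof (Eo_pos i p); lra);
    try (pose proof (Eo_pos i' p'); pose proof (Eo_pos i 1); lra);
    try (pose proof (Eo_pos i' 1); pose proof (Eo_pos i p); lra);
    try (pose proof (Eo_pos i' (Pos.succ p')); pose proof (Eo_pos i p); lra);
    try (pose proof (Eo_pos i' p'); pose proof (Eo_pos i (Pos.succ p)); lra).
  - apply Eo_inj in E; auto. destruct E; auto.
  - apply Eo_inj in E; auto. destruct E as [? E]. exfalso. symmetry in E.
    apply Pos.succ_not_1 in E. auto.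
  - apply Eo_inj in E; auto. destruct E as [? E]. exfalso. apply Pos.succ_not_1 in E. auto.
  - apply Eo_inj in E; auto. destruct E as [? E]. apply Pos.succ_inj in E. subst. auto.
  - assert (E' : Eo i p = Eo i' p') by lra. apply Eo_inj in E'; auto. destruct E'; subst; auto.
Qed.

Lemma pow2_ge m : INR m <= 2 ^ m.
Proof.
  induction m. simpl. lra. rewrite S_INR. simpl.
  assert (1 <= 2 ^ m) by (apply pow_R1_Rle; lra). lra.
Qed.

Lemma odd_between w : exists m : Z, Z.odd m = true /\ w < IZR m <= w + 2.
Proof.
  pose proof (fl_spec w) as [A B].
  destruct (Z.odd (fl w + 1)) eqn:E.
  - exists (fl w + 1)%Z. split; auto. rewrite plus_IZR. simpl. lra.
  - exists (fl w + 2)%Z. split.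
    + replace (fl w + 2)%Z with (Z.succ (fl w + 1)) by lia. rewrite Z.odd_succ.
      rewrite <- Z.negb_odd, E. auto.
    + rewrite plus_IZR. simpl. lra.
Qed.

Lemma Dk_dense i u v : u < v -> exists z, u < Dk i z < v.
Proof.
  intro Huv.
  set (k := Z.to_nat (up (2 / (v - u)))).
  assert (Hk : 2 / (v - u) < INR k).
  { unfold k. destruct (archimed (2 / (v - u))) as [A _].
    assert (0 < 2 / (v - u)) by (apply Rdiv_lt_0_compat; lra).
    assert (0 < IZR (up (2 / (v-u)))) by lra.
    assert (0 < up (2 / (v-u)))%Z by (apply lt_IZR; auto).
    rewrite INR_IZR_INZ, Z2Nat.id by lia. auto. }
  set (M := 2 ^ (3 * k + i)).
  assert (HM : INR k <= M).
  { unfold M. eapply Rle_trans. apply pow2_ge. apply Rle_pow. lra. lia. }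
  assert (HM0 : 0 < M) by (apply pow_lt; lra).
  assert (H2 : 2 < (v - u) * M).
  { assert (2 / (v - u) * (v - u) = 2) by (field; lra). nra. }
  destruct (odd_between (u * M)) as [m [Hm [B1 B2]]].
  assert (Hval : u < IZR m / M < v).
  { split. apply mdiv_lt_r; lra. apply mdiv_lt_l; lra. }
  destruct m as [|o|o]; try discriminate.
  - assert (Ho : isodd o) by (destruct o; simpl in *; auto; discriminate).
    set (p := shl o k).
    destruct (v2_shl o k Ho) as [V O].
    assert (Ep : Eo i p = IZR (Zpos o) / M).
    { unfold Eo, M. fold p in V, O. rewrite V, O. auto. }
    destruct (Pos.eq_dec p 1) as [P1|P1].
    + exists Z0. simpl. rewrite <- P1, Ep. auto.
    + exists (Zpos (Pos.pred p)). simpl. rewrite Pos.succ_pred by auto. rewrite Ep. auto.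
  - assert (Ho : isodd o) by (destruct o; simpl in *; auto; discriminate).
    set (p := shl o k).
    destruct (v2_shl o k Ho) as [V O].
    assert (Ep : Eo i p = IZR (Zpos o) / M).
    { unfold Eo, M. fold p in V, O. rewrite V, O. auto. }
    exists (Zneg p). simpl. rewrite Ep.
    replace (IZR (Z.neg o)) with (- IZR (Z.pos o)) in Hval by (rewrite <- opp_IZR; auto).
    replace (- (IZR (Z.pos o) / M)) with (- IZR (Z.pos o) / M) by (field; lra). auto.
Qed.

Definition aX (x : R) : R := 3/8 + (x - IZR (fl x)) / 4.
Definition Tu (i : nat) (x : R) : topo := Tt i (cseq (aX x) (Dk i (fl x))).
Definition plex (a d a' d' : R) : Prop := a < a' \/ (a = a' /\ d < d').

Lemma aX_bounds x : 3/8 <= aX x < 5/8.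
Proof. unfold aX. pose proof (fl_spec x). lra. Qed.

Lemma tsub_antisym X Y : tsub X Y -> tsub Y X -> X = Y.
Proof.
  intros H1 H2. apply functional_extensionality. intro U.
  apply propositional_extensionality. split; auto.
Qed.

Lemma Tc_incl_neq i j a d a' d' : (i < 3)%nat -> 3/8 <= a <= 5/8 -> 3/8 <= a' <= 5/8 ->
  plex a d a' d' ->
  tsub (Tt j (cseq a' d')) (Tt i (cseq a d)) /\ Tt i (cseq a d) <> Tt j (cseq a' d').
Proof.
  intros Hi Ha Ha' Hp.
  assert (Hty : i <> 3%nat) by lia.
  assert (Hev : exists N0, forall n, (N0 <= n)%Z -> cseq a d n < cseq a' d' n).
  { destruct Hp as [Hp|[E Hp]].
    - apply cseq_lt_a; auto.
    - exists 0%Z. intros n _. subst a'. apply cseq_lt_d; auto. }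
  split.
  - apply Tt_incl_lt; auto.
  - apply Tt_neq_lt; auto.
    + intro m. apply cseq_bounds; auto.
    + intro m. apply cseq_bounds; auto.
Qed.

Lemma Tu_incl_neq i j x y : (i < 3)%nat ->
  plex (aX x) (Dk i (fl x)) (aX y) (Dk j (fl y)) ->
  tsub (Tu j y) (Tu i x) /\ Tu i x <> Tu j y.
Proof.
  intros Hi Hp. pose proof (aX_bounds x). pose proof (aX_bounds y).
  unfold Tu. apply Tc_incl_neq; auto; lra.
Qed.

Lemma pos_eq i j x y : (i < 3)%nat -> (j < 3)%nat -> aX x = aX y ->
  Dk i (fl x) = Dk j (fl y) -> i = j /\ x = y.
Proof.
  intros Hi Hj Ha Hd. apply Dk_inj in Hd; auto. destruct Hd as [E1 E2].
  split; auto. unfold aX in Ha. rewrite E2 in Ha. lra.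
Qed.

Lemma plex_tri a d a' d' : plex a d a' d' \/ plex a' d' a d \/ (a = a' /\ d = d').
Proof.
  unfold plex. destruct (Rtotal_order a a') as [H|[H|H]].
  - auto.
  - destruct (Rtotal_order d d') as [G|[G|G]]; auto.
  - auto.
Qed.

Definition KU (i : nat) : topo -> Prop := fun T => exists x, T = Tu i x.

Lemma union_KU T : union3 (KU 0) (KU 1) (KU 2) T -> exists i x, (i < 3)%nat /\ T = Tu i x.
Proof.
  intros [[x H]|[[x H]|[x H]]]; [exists 0%nat|exists 1%nat|exists 2%nat]; exists x; split; auto.
Qed.

Lemma Tu_compare i j x y : (i < 3)%nat -> (j < 3)%nat ->
  (tsub (Tu j y) (Tu i x) /\ Tu i x <> Tu j y /\ plex (aX x) (Dk i (fl x)) (aX y) (Dk j (fl y))) \/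
  (tsub (Tu i x) (Tu j y) /\ Tu j y <> Tu i x /\ plex (aX y) (Dk j (fl y)) (aX x) (Dk i (fl x))) \/
  (i = j /\ x = y).
Proof.
  intros Hi Hj.
  destruct (plex_tri (aX x) (Dk i (fl x)) (aX y) (Dk j (fl y))) as [H|[H|[H1 H2]]].
  - left. pose proof (Tu_incl_neq i j x y Hi H). tauto.
  - right; left. pose proof (Tu_incl_neq j i y x Hj H). tauto.
  - right; right. apply pos_eq; auto.
Qed.

Lemma union_chain : chain (union3 (KU 0) (KU 1) (KU 2)).
Proof.
  intros X Y HX HY. apply union_KU in HX as [i [x [Hi E1]]]. apply union_KU in HY as [j [y [Hj E2]]].
  subst. destruct (Tu_compare i j x y Hi Hj) as [H|[H|[E1 E2]]].
  - right. tauto.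
  - left. tauto.
  - subst. left. intros U H; auto.
Qed.

Lemma KU_chain i : (i < 3)%nat -> chain (KU i).
Proof.
  intros Hi X Y [x E1] [y E2]. subst.
  destruct (Tu_compare i i x y Hi Hi) as [H|[H|[E1 E2]]].
  - right. tauto.
  - left. tauto.
  - subst. left. intros U H; auto.
Qed.

Lemma class_dense k a1 d1 a2 d2 : (k < 3)%nat -> 3/8 <= a1 < 5/8 -> plex a1 d1 a2 d2 ->
  exists z, plex a1 d1 (aX z) (Dk k (fl z)) /\ plex (aX z) (Dk k (fl z)) a2 d2.
Proof.
  intros Hk Ha Hp.
  assert (Hw : exists w, d1 < Dk k w /\ (a1 < a2 \/ Dk k w < d2)).
  { destruct Hp as [Hp|[E Hp]].
    - destruct (Dk_dense k d1 (d1 + 1) ltac:(lra)) as [w Hw]. exists w. split. lra. left; auto.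
    - destruct (Dk_dense k d1 d2 Hp) as [w Hw]. exists w. split. lra. right; lra. }
  destruct Hw as [w [Hw1 Hw2]].
  set (z := IZR w + (a1 - 3/8) * 4).
  assert (Hf : fl z = w) by (apply fl_unique; unfold z; lra).
  assert (Ha1 : aX z = a1) by (unfold aX; rewrite Hf; unfold z; field).
  exists z. rewrite Hf, Ha1. split.
  - right. auto.
  - destruct Hp as [Hp|[E Hp]].
    + left. auto.
    + right. split. auto. destruct Hw2. lra. auto.
Qed.

Lemma KU_dense k : (k < 3)%nat -> dense_in (KU k) (union3 (KU 0) (KU 1) (KU 2)).
Proof.
  intros Hk X Y HX HY HXY HXY'.
  apply union_KU in HX as [i [x [Hi E1]]]. apply union_KU in HY as [j [y [Hj E2]]]. subst.
  destruct (Tu_compare i j x y Hi Hj) as [[H1 [H2 H3]]|[[H1 [H2 H3]]|[E1 E2]]].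
  - exfalso. apply HXY'. apply tsub_antisym; auto.
  - pose proof (aX_bounds y).
    destruct (class_dense k (aX y) (Dk j (fl y)) (aX x) (Dk i (fl x)) Hk ltac:(lra) H3) as [z [Z1 Z2]].
    destruct (Tu_incl_neq j k y z Hj Z1) as [A1 A2].
    destruct (Tu_incl_neq k i z x Hk Z2) as [B1 B2].
    exists (Tu k z). split. exists z; auto. split. auto. split. auto. split; auto.
  - subst. exfalso. auto.
Qed.

Lemma KU_card i : (i < 3)%nat -> card_c (KU i).
Proof.
  intro Hi. exists (Tu i). split. intro r. exists r; auto. split.
  - intros r s E. destruct (Tu_compare i i r s Hi Hi) as [[_ [H _]]|[[_ [H _]]|[_ H]]]; auto; exfalso; apply H; auto.
  - intros t [x E]. exists x. auto.
Qed.

Lemma Tt_eta ty c U : Tt ty c U -> eta U.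
Proof. intros [H _]; auto. Qed.

Lemma Tt_nb ty c U : Tt ty c U -> U 0 -> nbT ty c U.
Proof. intros [_ H]; auto. Qed.

Lemma Tt_not_regular ty c : (ty = 0%nat \/ ty = 1%nat) -> (forall m, 1/4 <= c m <= 3/4) ->
  ~ regular (Tt ty c).
Proof.
  intros Hty Hc Hreg.
  set (F := fun y => exists n, (1 <= n)%Z /\ y = IZR n + c n).
  assert (Hcl : closed_in (Tt ty c) F).
  { split.
    - intros x Hx. set (n0 := fl x). pose proof (fl_spec x) as [X1 X2]. fold n0 in X1, X2.
      destruct (Z_le_gt_dec 1 n0) as [Hn0|Hn0].
      + assert (Hne : x <> IZR n0 + c n0) by (intro E; apply Hx; exists n0; auto).
        assert (Hp : 0 < Rabs (x - (IZR n0 + c n0))) by (apply Rabs_pos_lt; lra).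
        exists (Rmin (1/8) (Rabs (x - (IZR n0 + c n0)))). split. apply Rmin_pos; lra.
        intros y Hy [m [Hm E]]. subst y.
        pose proof (Rmin_l (1/8) (Rabs (x - (IZR n0 + c n0)))).
        pose proof (Rmin_r (1/8) (Rabs (x - (IZR n0 + c n0)))).
        pose proof (Hc m). pose proof Hy as Hy'. apply Rabs_def2 in Hy'. destruct Hy'.
        assert (m = n0).
        { assert (m <= n0)%Z by (apply IZR_lt_plus1; lra).
          assert (n0 <= m)%Z by (apply IZR_gt_minus1; lra). lia. }
        subst m. rewrite Rabs_minus_sym in Hy. lra.
      + exists (1/8). split. lra. intros y Hy [m [Hm E]]. subst y.
        pose proof (Hc m). apply Rabs_def2 in Hy. destruct Hy.
        assert (m <= n0)%Z by (apply IZR_lt_plus1; lra). lia.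
    - intros _. exists (1/8), 1%Z, (fun _ => 1/16). split. apply okp_std.
      intros x Hx [m [Hm E]].
      pose proof (Hc m). assert (1 <= IZR m) by (apply IZR_le; auto).
      apply Bas_block with (n := m) in Hx.
      + destruct Hx as [_ [_ [H1 H2]]]. destruct Hty; subst ty.
        * simpl in H1. lra.
        * apply H2; auto.
      + apply okp_std.
      + intro k. pose proof (Hc k). lra.
      + lra.
      + lra.
      + lra. }
  assert (HF0 : ~ F 0).
  { intros [m [Hm E]]. pose proof (Hc m). assert (1 <= IZR m) by (apply IZR_le; auto). lra. }
  destruct (Hreg F 0 Hcl HF0) as [U [V [HU [HV [U0 [FV Hd]]]]]].
  destruct (Tt_nb _ _ _ HU U0) as [e [N [dl [[He [He' [HN Hdl]]] HB]]]].
  assert (FN : F (IZR N + c N)) by (exists N; auto).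
  pose proof (FV _ FN) as VN.
  destruct (Tt_eta _ _ _ HV _ VN) as [r [Hr Hball]].
  set (z := IZR N + c N - Rmin r e / 2).
  assert (Hm1 : 0 < Rmin r e) by (apply Rmin_pos; lra).
  pose proof (Rmin_l r e). pose proof (Rmin_r r e). pose proof (Hc N).
  apply (Hd z).
  - apply HB. right. exists N. split. lia. split. unfold z; lra. split.
    pose proof (wd_nonneg ty e (dl N) He (proj1 (Hdl N))). unfold z; lra.
    intros _. unfold z. lra.
  - apply Hball. unfold z. replace (IZR N + c N - Rmin r e / 2 - (IZR N + c N)) with (- (Rmin r e / 2)) by ring.
    rewrite Rabs_Ropp, Rabs_pos_eq; lra.
Qed.

Fixpoint mind (f : nat -> R) (m : nat) : R :=
  match m with O => f O | S m' => Rmin (mind f m') (f (S m')) end.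

Lemma mind_pos f m : (forall k, 0 < f k) -> 0 < mind f m.
Proof. intro H. induction m; simpl; auto. apply Rmin_pos; auto. Qed.

Lemma mind_le f m k : (k <= m)%nat -> mind f m <= f k.
Proof.
  induction m; intro Hk; simpl.
  - assert (k = 0%nat) by lia. subst. lra.
  - destruct (Nat.eq_dec k (S m)) as [E|E].
    + subst. apply Rmin_r.
    + eapply Rle_trans. apply Rmin_l. apply IHm. lia.
Qed.

Lemma wd_12 ty e d : ty = 1%nat \/ ty = 2%nat -> wd ty e d = d.
Proof. intros [H|H]; subst; auto. Qed.

Lemma Tt_not_fc ty c : (ty = 1%nat \/ ty = 2%nat) -> (forall m, 1/4 <= c m <= 3/4) ->
  ~ first_countable (Tt ty c).
Proof.
  intros Hty Hc Hfc. destruct (Hfc 0) as [b [Hb1 Hb2]].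
  assert (Hch : forall k : nat, {p : R * Z * (Z -> R) |
     okp (fst (fst p)) (snd (fst p)) (snd p) /\
     forall x, Bas ty c (fst (fst p)) (snd (fst p)) (snd p) x -> b k x}).
  { intro k. apply constructive_indefinite_description.
    destruct (Hb1 k) as [Hk Hk0]. destruct (Tt_nb _ _ _ Hk Hk0) as [e [N [dl [Hp HB]]]].
    exists (e, N, dl). simpl. auto. }
  set (ek := fun k => fst (fst (proj1_sig (Hch k)))).
  set (Nk := fun k => snd (fst (proj1_sig (Hch k)))).
  set (dk := fun k => snd (proj1_sig (Hch k))).
  assert (Hk : forall k, okp (ek k) (Nk k) (dk k) /\ forall x, Bas ty c (ek k) (Nk k) (dk k) x -> b k x).
  { intro k. exact (proj2_sig (Hch k)). }
  set (ds := fun n : Z => mind (fun k => dk k n) (Z.to_nat n) / 2).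
  assert (Hds : forall n, 0 < ds n /\ ds n <= 1/16).
  { intro n. unfold ds. split.
    - assert (0 < mind (fun k => dk k n) (Z.to_nat n)).
      { apply mind_pos. intro k. destruct (Hk k) as [[_ [_ [_ H]]] _]. apply H. }
      lra.
    - pose proof (mind_le (fun k => dk k n) (Z.to_nat n) 0 ltac:(lia)) as Hm0.
      destruct (Hk 0%nat) as [[_ [_ [_ Hq]]] _]. specialize (Hq n). simpl in *. lra. }
  assert (Hp : okp (1/8) 1 ds) by (repeat split; try lra; try lia; apply Hds).
  destruct (Hb2 (Bas ty c (1/8) 1 ds) (Bas_open _ _ _ _ _ Hp) (Bas_zero ty c (1/8) 1 ds ltac:(lra)))
    as [k Hsub].
  destruct (Hk k) as [[He [He' [HN Hd]]] HB].
  set (n := Z.max (Nk k) (Z.max 1 (Z.of_nat k))).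
  assert (Hn1 : 1 <= IZR n) by (apply IZR_le; unfold n; lia).
  pose proof (Hc n). pose proof (Hd n).
  set (x := IZR n + c n + 3/4 * dk k n).
  assert (Hx : b k x).
  { apply HB. right. exists n. split. unfold n; lia. rewrite wd_12 by auto.
    split. unfold x; lra. split. unfold x; lra. intros _. unfold x; lra. }
  apply Hsub in Hx. apply Bas_block with (n := n) in Hx; auto.
  - destruct Hx as [_ [_ [H1 _]]]. rewrite wd_12 in H1 by auto.
    assert (ds n <= dk k n / 2).
    { unfold ds. pose proof (mind_le (fun k0 => dk k0 n) (Z.to_nat n) k ltac:(unfold n; lia)).
      simpl in *. lra. }
    unfold x in H1. lra.
  - intro m. pose proof (Hc m). lra.
  - unfold x; lra.
  - unfold x; lra.
  - unfold x; lra.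
Qed.

Lemma not_closure (tau : topo) A x : ~ closure tau A x ->
  exists U, tau U /\ U x /\ forall y, U y -> ~ A y.
Proof.
  intro H. apply NNPP. intro H'. apply H. intros U HU Ux. apply NNPP. intro H''.
  apply H'. exists U. split; auto. split; auto. intros y Uy Ay. apply H''. exists y; auto.
Qed.

Lemma closure_incl (tau : topo) A x : A x -> closure tau A x.
Proof. intros Ax U _ Ux. exists x; auto. Qed.

Lemma shrink c e N dl b : okp e N dl -> (forall m, 1/4 <= c m <= 3/4) ->
  ~ Bas 2 c e N dl b -> exists s, 0 < s /\ forall y, Rabs (y - b) < s ->
     ~ Bas 2 c (e/2) N (fun n => dl n / 2) y.
Proof.
  intros [He [He' [HN Hd]]] Hc Hb.
  set (s := Rmin (e/2) (dl (fl b) / 2)).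
  pose proof (Hd (fl b)) as Hdb.
  assert (Hs : 0 < s) by (apply Rmin_pos; lra).
  assert (Hs1 : s <= e/2) by apply Rmin_l. assert (Hs2 : s <= dl (fl b) / 2) by apply Rmin_r.
  exists s. split; auto. intros y Hy [H|[m [Hm [H1 [H2 H3]]]]].
  - apply Hb. left. assert (Rabs b <= Rabs y + Rabs (y - b)).
    { replace b with (y - (y - b)) at 1 by ring. eapply Rle_trans. apply Rabs_triang.
      rewrite Rabs_Ropp. lra. } lra.
  - simpl in H2. pose proof (Hc m) as Hcm. pose proof (Hd m) as Hdm. apply Rabs_def2 in Hy. destruct Hy as [Hy1 Hy2].
    destruct (Rlt_dec b (IZR m + c m + dl m)) as [Hlt|Hge].
    + apply Hb. right. exists m. split; auto. split. lra. split. simpl. auto.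
      intro; discriminate.
    + assert (Hfm : fl b = m) by (apply fl_unique; lra).
      subst m. lra.
Qed.

Lemma cn_core c A B W :
  (forall x, closure (Tt 2 c) A x -> B x -> False) ->
  (forall x, A x -> closure (Tt 2 c) B x -> False) ->
  ~ B 0 -> Tt 2 c W -> (A 0 -> W 0) ->
  (forall b, B b -> exists s, 0 < s /\ forall y, Rabs (y - b) < s -> ~ W y) ->
  exists U V, Tt 2 c U /\ Tt 2 c V /\ subset A U /\ subset B V /\
      (forall z, U z -> V z -> False).
Proof.
  intros H1 H2 HB0 HW HW0 HWs.
  set (U := fun z => W z \/ exists a r, A a /\ a <> 0 /\ 0 < r /\ r <= Rabs a /\
              (forall y, Rabs (y - a) < r -> ~ B y) /\ Rabs (z - a) < r / 2).
  set (V := fun z => exists b s, B b /\ 0 < s /\ s <= Rabs b /\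
              (forall y, Rabs (y - b) < s -> ~ A y) /\ (forall y, Rabs (y - b) < s -> ~ W y) /\
              Rabs (z - b) < s / 2).
  exists U, V. split; [|split; [|split; [|split]]].
  - split.
    + intros z [Wz|[a [r [Aa [Ha [Hr [Hra [HrB Hz]]]]]]]].
      * destruct (Tt_eta _ _ _ HW z Wz) as [e [He HWe]]. exists e. split; auto.
        intros y Hy. left. auto.
      * exists (r/2 - Rabs (z - a)). split. lra. intros y Hy. right. exists a, r.
        repeat split; auto.
        assert (Rabs (y - a) <= Rabs (y - z) + Rabs (z - a)).
        { replace (y - a) with ((y - z) + (z - a)) by ring. apply Rabs_triang. } lra.
    + intros [W0|[a [r [Aa [Ha [Hr [Hra [HrB Hz]]]]]]]].
      * destruct (Tt_nb _ _ _ HW W0) as [e [N [dl [Hp HB]]]]. exists e, N, dl. split; auto.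
        intros x Hx. left. auto.
      * exfalso. rewrite Rminus_0_l, Rabs_Ropp in Hz. pose proof (Rabs_pos_lt a Ha). lra.
  - split.
    + intros z [b [s [Bb [Hs [Hsb [HA [HWb Hz]]]]]]].
      exists (s/2 - Rabs (z - b)). split. lra. intros y Hy. exists b, s.
      repeat split; auto.
      assert (Rabs (y - b) <= Rabs (y - z) + Rabs (z - b)).
      { replace (y - b) with ((y - z) + (z - b)) by ring. apply Rabs_triang. } lra.
    + intros [b [s [Bb [Hs [Hsb [HA [HWb Hz]]]]]]]. exfalso.
      assert (b <> 0) by (intro E; subst; auto).
      rewrite Rminus_0_l, Rabs_Ropp in Hz. pose proof (Rabs_pos_lt b H). lra.
  - intros a Aa. destruct (Req_dec a 0) as [E|E].
    + subst. left. auto.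
    + right. destruct (not_closure _ _ _ (fun h => H2 a Aa h)) as [O [HO [Oa HOB]]].
      destruct (Tt_eta _ _ _ HO a Oa) as [r0 [Hr0 Hball]].
      pose proof (Rabs_pos_lt a E).
      exists a, (Rmin r0 (Rabs a)). pose proof (Rmin_l r0 (Rabs a)). pose proof (Rmin_r r0 (Rabs a)).
      repeat split; auto. apply Rmin_pos; lra.
      intros y Hy. apply HOB. apply Hball. lra.
      rewrite Rminus_diag, Rabs_R0. assert (0 < Rmin r0 (Rabs a)) by (apply Rmin_pos; lra). lra.
  - intros b Bb. assert (Hb0 : b <> 0) by (intro E; subst; auto).
    destruct (not_closure _ _ _ (fun h => H1 b h Bb)) as [O [HO [Ob HOA]]].
    destruct (Tt_eta _ _ _ HO b Ob) as [s0 [Hs0 Hball]].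
    destruct (HWs b Bb) as [s1 [Hs1 HWs1]].
    pose proof (Rabs_pos_lt b Hb0).
    set (s := Rmin s0 (Rmin s1 (Rabs b))).
    assert (Hs : 0 < s) by (unfold s; repeat apply Rmin_pos; lra).
    assert (s <= s0) by apply Rmin_l.
    assert (s <= s1) by (unfold s; eapply Rle_trans; [apply Rmin_r|apply Rmin_l]).
    assert (s <= Rabs b) by (unfold s; eapply Rle_trans; [apply Rmin_r|apply Rmin_r]).
    exists b, s. repeat split; auto.
    + intros y Hy. apply HOA. apply Hball. lra.
    + intros y Hy. apply HWs1. lra.
    + rewrite Rminus_diag, Rabs_R0. lra.
  - intros z [Wz|[a [r [Aa [Ha [Hr [Hra [HrB Hz]]]]]]]] [b [s [Bb [Hs [Hsb [HA [HWb Hz']]]]]]].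
    + apply (HWb z); auto. lra.
    + assert (Rabs (a - b) <= Rabs (z - a) + Rabs (z - b)).
      { replace (a - b) with (- (z - a) + (z - b)) by ring. eapply Rle_trans. apply Rabs_triang.
        rewrite Rabs_Ropp. lra. }
      destruct (Rle_dec s r).
      * apply (HrB b); auto. rewrite Rabs_minus_sym. lra.
      * apply (HA a); auto. lra.
Qed.

Lemma cn_side c A B : (forall m, 1/4 <= c m <= 3/4) ->
  (forall x, closure (Tt 2 c) A x -> B x -> False) ->
  (forall x, A x -> closure (Tt 2 c) B x -> False) ->
  ~ B 0 ->
  exists U V, Tt 2 c U /\ Tt 2 c V /\ subset A U /\ subset B V /\
      (forall z, U z -> V z -> False).
Proof.
  intros Hc H1 H2 HB0. destruct (classic (A 0)) as [HA0|HA0].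
  - destruct (not_closure _ _ _ (fun h => H2 0 HA0 h)) as [O [HO [O0 HOB]]].
    destruct (Tt_nb _ _ _ HO O0) as [e [N [dl [Hp HB]]]].
    destruct Hp as [He [He' [HN Hd]]].
    assert (Hp2 : okp (e/2) N (fun n => dl n / 2)).
    { repeat split; try lra; try lia; pose proof (Hd n); lra. }
    apply (cn_core c A B (Bas 2 c (e/2) N (fun n => dl n / 2))); auto.
    + apply Bas_open; auto.
    + intros _. apply Bas_zero. lra.
    + intros b Bb. apply shrink; auto. repeat split; auto; apply Hd.
      intro Hb. apply (HOB b); auto.
  - apply (cn_core c A B (fun _ => False)); auto.
    + split. intros x []. intros [].
    + intros b _. exists 1. split. lra. intros y _ [].
Qed.

Lemma Tt_cn c : (forall m, 1/4 <= c m <= 3/4) -> completely_normal (Tt 2 c).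
Proof.
  intros Hc A B H1 H2. destruct (classic (B 0)) as [HB0|HB0].
  - assert (HA0 : ~ A 0) by (intro HA0; apply (H2 0 HA0); apply closure_incl; auto).
    destruct (cn_side c B A Hc (fun x h1 h2 => H2 x h2 h1) (fun x h1 h2 => H1 x h2 h1) HA0)
      as [U [V [HU [HV [HBU [HAV Hd]]]]]].
    exists V, U. split; [|split; [|split; [|split]]]; auto. intros z Vz Uz. apply (Hd z); auto.
  - apply cn_side; auto.
Qed.

Definition sbase (c : Z -> R) (n : nat) : R -> Prop :=
  let (j, k) := Cantor.of_nat n in
  match k with
  | O => Bas 0 c (1 / (8 * (INR j + 1))) (Z.of_nat j + 1) (fun _ => 1/16)
  | S k' => let (u, v) := Cantor.of_nat k' in
      fun y => IZR (Z.of_nat u - Z.of_nat v) / (INR j + 1) < y <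
               (IZR (Z.of_nat u - Z.of_nat v) + 2) / (INR j + 1) /\ y <> 0
  end.

Lemma Bas0_dl c e N dl dl' x : Bas 0 c e N dl x -> Bas 0 c e N dl' x.
Proof. intros [H|[n [H1 [H2 [H3 H4]]]]]. left; auto. right. exists n. simpl in *. auto. Qed.

Lemma Tt0_sc c : second_countable (Tt 0 c).
Proof.
  exists (sbase c). split.
  - intro n. unfold sbase. destruct (Cantor.of_nat n) as [j k].
    pose proof (pos_INR j) as Hj.
    destruct k as [|k'].
    + apply Bas_open. repeat split; try lra; try lia.
      * apply Rdiv_lt_0_compat; lra.
      * apply Rmult_le_reg_r with (8 * (INR j + 1)). lra.
        replace (1 / (8 * (INR j + 1)) * (8 * (INR j + 1))) with 1 by (field; lra). nra.
    + destruct (Cantor.of_nat k') as [u v]. set (p := IZR (Z.of_nat u - Z.of_nat v)). split.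
      * intros y [[Y1 Y2] Y3].
        assert (0 < Rabs y) by (apply Rabs_pos_lt; auto).
        exists (Rmin (y - p / (INR j + 1)) (Rmin ((p + 2) / (INR j + 1) - y) (Rabs y))).
        split. repeat apply Rmin_pos; lra.
        intros z Hz.
        pose proof (Rmin_l (y - p / (INR j + 1)) (Rmin ((p + 2) / (INR j + 1) - y) (Rabs y))).
        pose proof (Rmin_r (y - p / (INR j + 1)) (Rmin ((p + 2) / (INR j + 1) - y) (Rabs y))).
        pose proof (Rmin_l ((p + 2) / (INR j + 1) - y) (Rabs y)).
        pose proof (Rmin_r ((p + 2) / (INR j + 1) - y) (Rabs y)).
        pose proof Hz as Hz'. apply Rabs_def2 in Hz'. destruct Hz'.
        split. split; lra. intro E. subst z. rewrite Rminus_0_l, Rabs_Ropp in Hz. lra.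
      * intros [_ H]. exfalso. auto.
  - intros U x HU Ux. destruct (Req_dec x 0) as [E|E].
    + subst x. destruct (Tt_nb _ _ _ HU Ux) as [e [N [dl [[He [He' [HN Hd]]] HB]]]].
      set (j := Z.to_nat (Z.max N (up (1 / e)))).
      exists (Cantor.to_nat (j, 0%nat)). unfold sbase. rewrite Cantor.cancel_of_to.
      assert (Hj : 1 / e < INR j + 1).
      { unfold j. rewrite INR_IZR_INZ, Z2Nat.id by lia. destruct (archimed (1 / e)) as [A _].
        assert (IZR (up (1/e)) <= IZR (Z.max N (up (1 / e)))) by (apply IZR_le; lia). lra. }
      pose proof (pos_INR j).
      assert (H8 : 1 / (8 * (INR j + 1)) <= e).
      { assert (1 / e * e = 1) by (field; lra).
        apply Rmult_le_reg_r with (8 * (INR j + 1)). lra.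
        replace (1 / (8 * (INR j + 1)) * (8 * (INR j + 1))) with 1 by (field; lra). nra. }
      split.
      * apply Bas_zero. apply Rdiv_lt_0_compat; lra.
      * intros y Hy. apply HB. apply Bas0_dl with (dl := fun _ => 1/16).
        eapply Bas_mono; [exact H8| |intro; apply Rle_refl|exact Hy].
        unfold j. rewrite Z2Nat.id by lia. lia.
    + destruct (Tt_eta _ _ _ HU x Ux) as [r [Hr Hball]].
      set (j := Z.to_nat (up (4 / r))).
      set (J := INR j + 1).
      assert (HJ : 4 / r < J).
      { unfold J, j. destruct (archimed (4 / r)) as [A _].
        assert (0 < 4 / r) by (apply Rdiv_lt_0_compat; lra).
        assert (0 < up (4 / r))%Z by (apply lt_IZR; lra).
        rewrite INR_IZR_INZ, Z2Nat.id by lia. lra. }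
      assert (HJ0 : 0 < J) by (unfold J; pose proof (pos_INR j); lra).
      set (p := (fl (x * J) - 1)%Z).
      set (k := Cantor.to_nat (Z.to_nat p, Z.to_nat (- p))).
      exists (Cantor.to_nat (j, S k)). unfold sbase. rewrite Cantor.cancel_of_to.
      unfold k. rewrite Cantor.cancel_of_to.
      assert (Ep : (Z.of_nat (Z.to_nat p) - Z.of_nat (Z.to_nat (- p)) = p)%Z) by lia.
      rewrite Ep. fold J.
      pose proof (fl_spec (x * J)) as [F1 F2].
      assert (Hp1 : IZR p = IZR (fl (x * J)) - 1) by (unfold p; rewrite minus_IZR; auto).
      assert (L1 : IZR p / J < x) by (apply mdiv_lt_l; lra).
      assert (L2 : x < (IZR p + 2) / J) by (apply mdiv_lt_r; lra).
      assert (W : (IZR p + 2) / J - IZR p / J = 2 / J) by (field; lra).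
      assert (W2 : 2 / J < r).
      { apply mdiv_lt_l; auto. assert (4 / r * r = 4) by (field; lra). nra. }
      split. split; auto.
      intros y [[Y1 Y2] Y3]. apply Hball. apply Rabs_def1; lra.
Qed.

Definition phi (c c' s : R) : R :=
  if Rle_dec s c then s * (c' / c) else 1 - (1 - s) * ((1 - c') / (1 - c)).

Definition Lc (m M : R) : R := 1 / (m * (1 - M)).

Lemma Lc_ge1 m M : 0 < m <= M -> M < 1 -> 1 <= Lc m M.
Proof.
  intros Hm HM. unfold Lc. apply Rmult_le_reg_r with (m * (1 - M)). nra.
  replace (1 / (m * (1 - M)) * (m * (1 - M))) with 1 by (field; lra). nra.
Qed.

Lemma ratios m M c c' : 0 < m <= M -> M < 1 -> m <= c <= M -> m <= c' <= M ->
  0 < c' / c <= Lc m M /\ 0 < (1 - c') / (1 - c) <= Lc m M /\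
  c' / c * c = c' /\ (1 - c') / (1 - c) * (1 - c) = 1 - c'.
Proof.
  intros Hm HM Hc Hc'. unfold Lc.
  assert (E1 : c' / c * c = c') by (field; lra).
  assert (E2 : (1 - c') / (1 - c) * (1 - c) = 1 - c') by (field; lra).
  assert (E3 : 1 / (m * (1 - M)) * (m * (1 - M)) = 1) by (field; lra).
  generalize dependent (c' / c). intros r1 E1.
  generalize dependent ((1 - c') / (1 - c)). intros r2 E2.
  generalize dependent (1 / (m * (1 - M))). intros L E3.
  assert (0 < r1) by nra. assert (0 < r2) by nra.
  assert (Hp : 0 < m * (1 - M)) by nra.
  assert (0 < L) by nra.
  split. split; auto.
  - assert (r1 * m <= 1) by nra. assert (L * m >= 1) by nra.
    assert ((L - r1) * m >= 0) by nra. nra.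
  - split. split; auto. assert (r2 * (1 - M) <= 1) by nra. assert (L * (1 - M) >= 1) by nra.
    assert ((L - r2) * (1 - M) >= 0) by nra. nra.
    split; auto.
Qed.

Lemma phi_lip m M c c' s1 s2 : 0 < m <= M -> M < 1 -> m <= c <= M -> m <= c' <= M ->
  0 <= s1 <= s2 -> s2 <= 1 ->
  0 <= phi c c' s2 - phi c c' s1 <= Lc m M * (s2 - s1).
Proof.
  intros Hm HM Hc Hc' Hs1 Hs2.
  destruct (ratios m M c c' Hm HM Hc Hc') as [[R1 R1'] [[R2 R2'] [E1 E2]]].
  unfold phi. generalize dependent (c' / c). intros r1 R1 R1' E1.
  generalize dependent ((1 - c') / (1 - c)). intros r2 R2 R2' E2.
  set (L := Lc m M) in *.
  destruct (Rle_dec s2 c); destruct (Rle_dec s1 c); try lra.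
  - split; nra.
  - assert (Eq : 1 - (1 - s2) * r2 - s1 * r1 = (s2 - c) * r2 + (c - s1) * r1) by nra.
    rewrite Eq. split; nra.
  - split; nra.
Qed.

Lemma phi_0 c c' : 0 < c -> phi c c' 0 = 0.
Proof. intro. unfold phi. destruct (Rle_dec 0 c). ring. lra. Qed.

Lemma phi_1 c c' : c < 1 -> phi c c' 1 = 1.
Proof. intro. unfold phi. destruct (Rle_dec 1 c). lra. ring. Qed.

Lemma phi_c c c' : 0 < c -> phi c c' c = c'.
Proof. intro. unfold phi. destruct (Rle_dec c c). field. lra. lra. Qed.

Lemma phi_lt1 m M c c' s : 0 < m <= M -> M < 1 -> m <= c <= M -> m <= c' <= M ->
  0 <= s < 1 -> 0 <= phi c c' s < 1.
Proof.
  intros Hm HM Hc Hc' Hs.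
  destruct (ratios m M c c' Hm HM Hc Hc') as [[R1 R1'] [[R2 R2'] [E1 E2]]].
  unfold phi. generalize dependent (c' / c). intros r1 R1 R1' E1.
  generalize dependent ((1 - c') / (1 - c)). intros r2 R2 R2' E2.
  destruct (Rle_dec s c); split; nra.
Qed.

Lemma phi_inv m M c c' s : 0 < m <= M -> M < 1 -> m <= c <= M -> m <= c' <= M ->
  0 <= s <= 1 -> phi c' c (phi c c' s) = s.
Proof.
  intros Hm HM Hc Hc' Hs. unfold phi at 2.
  destruct (Rle_dec s c).
  - unfold phi. destruct (Rle_dec (s * (c' / c)) c').
    + field. lra.
    + exfalso. apply n. assert (s * (c' / c) = s / c * c') by (field; lra).
      rewrite H. assert (s / c <= 1). { apply Rmult_le_reg_r with c. lra.
        replace (s / c * c) with s by (field; lra). lra. } nra.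
  - unfold phi. destruct (Rle_dec (1 - (1 - s) * ((1 - c') / (1 - c))) c').
    + exfalso. assert (1 - (1 - s) * ((1 - c') / (1 - c)) = 1 - (1 - s) / (1 - c) * (1 - c')) by (field; lra).
      rewrite H in r. assert ((1 - s) / (1 - c) < 1).
      { apply mdiv_lt_l; lra. } nra.
    + field. lra.
Qed.

Definition hmap (c c' : Z -> R) (x : R) : R :=
  if Rlt_dec x 1 then x else IZR (fl x) + phi (c (fl x)) (c' (fl x)) (x - IZR (fl x)).

Definition cbd (m M : R) (c : Z -> R) : Prop := forall n, m <= c n <= M.

Lemma fl_ge1 x : 1 <= x -> (1 <= fl x)%Z.
Proof. intro. pose proof (fl_spec x). apply IZR_gt_minus1. simpl. lra. Qed.

Lemma fl_IZR n : fl (IZR n) = n.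
Proof. apply fl_unique; lra. Qed.

Lemma hmap_le1 c c' x : 0 < c 1%Z -> x <= 1 -> hmap c c' x = x.
Proof.
  intros Hc Hx. unfold hmap. destruct (Rlt_dec x 1). auto.
  assert (x = 1) by lra. subst. replace 1 with (IZR 1) by auto. rewrite fl_IZR.
  rewrite Rminus_diag, phi_0; auto. ring.
Qed.

Lemma hmap_block m M c c' k x : 0 < m <= M -> M < 1 -> cbd m M c -> cbd m M c' ->
  (1 <= k)%Z -> IZR k <= x <= IZR k + 1 ->
  hmap c c' x = IZR k + phi (c k) (c' k) (x - IZR k).
Proof.
  intros Hm HM Hc Hc' Hk Hx.
  assert (Hk1 : 1 <= IZR k) by (apply IZR_le; auto).
  unfold hmap. destruct (Rlt_dec x 1). lra.
  destruct (Req_dec x (IZR k + 1)) as [E|E].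
  - assert (fl x = k + 1)%Z by (apply fl_unique; rewrite plus_IZR; simpl; lra).
    rewrite H. rewrite plus_IZR. simpl. rewrite E.
    replace (IZR k + 1 - (IZR k + 1)) with 0 by ring. rewrite phi_0 by (pose proof (Hc (k+1)%Z); lra).
    replace (IZR k + 1 - IZR k) with 1 by ring. rewrite phi_1 by (pose proof (Hc k); lra). ring.
  - assert (fl x = k) by (apply fl_unique; lra). rewrite H. auto.
Qed.

Lemma fl_mono x y : x <= y -> (fl x <= fl y)%Z.
Proof. intro. pose proof (fl_spec x). pose proof (fl_spec y). apply IZR_lt_plus1. lra. Qed.

Lemma block_ind (P : R -> R -> Prop) :
  (forall x y z, x <= y <= z -> P x y -> P y z -> P x z) ->
  (forall x y, x <= y <= 1 -> P x y) ->
  (forall (k : Z) x y, (1 <= k)%Z -> IZR k <= x <= y /\ y <= IZR k + 1 -> P x y) ->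
  forall x y, x <= y -> P x y.
Proof.
  intros Ht H1 Hb.
  assert (Hmain : forall d : nat, forall x y, 1 <= x <= y -> (fl y - fl x <= Z.of_nat d)%Z -> P x y).
  { induction d; intros x y Hxy Hd.
    - pose proof (fl_mono x y (proj2 Hxy)). assert (fl y = fl x) by lia.
      pose proof (fl_spec x). pose proof (fl_spec y).
      apply (Hb (fl x)). apply fl_ge1; lra. rewrite H0 in *. lra.
    - destruct (Z.eq_dec (fl y) (fl x)) as [E|E].
      + apply IHd; auto. lia.
      + pose proof (fl_mono x y (proj2 Hxy)). pose proof (fl_spec x). pose proof (fl_spec y).
        assert (Hk : (fl x + 1 <= fl y)%Z) by lia.
        assert (Hk2 : IZR (fl x + 1) <= IZR (fl y)) by (apply IZR_le; auto).
        rewrite plus_IZR in Hk2. simpl in Hk2.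
        apply Ht with (IZR (fl x) + 1). lra.
        * apply (Hb (fl x)). apply fl_ge1; lra. lra.
        * apply IHd. lra. replace (IZR (fl x) + 1) with (IZR (fl x + 1)) by (rewrite plus_IZR; auto).
          rewrite fl_IZR. lia. }
  intros x y Hxy. destruct (Rle_dec y 1). apply H1; lra.
  destruct (Rle_dec 1 x).
  - apply (Hmain (Z.to_nat (fl y - fl x))). lra. rewrite Z2Nat.id. lia.
    pose proof (fl_mono x y Hxy). lia.
  - apply Ht with 1. lra. apply H1; lra.
    apply (Hmain (Z.to_nat (fl y - fl 1))). lra. rewrite Z2Nat.id. lia.
    pose proof (fl_mono 1 y ltac:(lra)). lia.
Qed.

Lemma hmap_lip m M c c' : 0 < m <= M -> M < 1 -> cbd m M c -> cbd m M c' ->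
  forall x y, x <= y -> 0 <= hmap c c' y - hmap c c' x <= Lc m M * (y - x).
Proof.
  intros Hm HM Hc Hc'. pose proof (Lc_ge1 m M Hm HM) as HL.
  apply block_ind.
  - intros x y z Hxyz H1 H2. split. lra. nra.
  - intros x y Hxy. pose proof (Hc 1%Z).
    rewrite !hmap_le1 by lra. split; nra.
  - intros k x y Hk [Hxy Hy].
    rewrite (hmap_block m M c c' k x), (hmap_block m M c c' k y); auto; try lra.
    pose proof (phi_lip m M (c k) (c' k) (x - IZR k) (y - IZR k) Hm HM (Hc k) (Hc' k)).
    replace (y - x) with ((y - IZR k) - (x - IZR k)) by ring.
    replace (IZR k + phi (c k) (c' k) (y - IZR k) - (IZR k + phi (c k) (c' k) (x - IZR k)))
      with (phi (c k) (c' k) (y - IZR k) - phi (c k) (c' k) (x - IZR k)) by ring.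
    apply H; lra.
Qed.

Lemma hmap_inv m M c c' : 0 < m <= M -> M < 1 -> cbd m M c -> cbd m M c' ->
  forall x, hmap c' c (hmap c c' x) = x.
Proof.
  intros Hm HM Hc Hc' x. pose proof (Hc 1%Z). pose proof (Hc' 1%Z).
  destruct (Rlt_dec x 1).
  - rewrite (hmap_le1 c c' x); try lra. rewrite hmap_le1; lra.
  - set (k := fl x). pose proof (fl_spec x) as [F1 F2]. fold k in F1, F2.
    assert (Hk : (1 <= k)%Z) by (apply fl_ge1; lra).
    rewrite (hmap_block m M c c' k x); auto; try lra.
    pose proof (phi_lt1 m M (c k) (c' k) (x - IZR k) Hm HM (Hc k) (Hc' k) ltac:(lra)).
    rewrite (hmap_block m M c' c k); auto; try lra.
    rewrite Rplus_minus_l, (phi_inv m M (c k) (c' k)); auto. ring. lra.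
Qed.

Lemma hmap_anchor m M c c' n : 0 < m <= M -> M < 1 -> cbd m M c -> cbd m M c' -> (1 <= n)%Z ->
  hmap c c' (IZR n) = IZR n /\ hmap c c' (IZR n + c n) = IZR n + c' n.
Proof.
  intros Hm HM Hc Hc' Hn. pose proof (Hc n). pose proof (Hc' n).
  rewrite !(hmap_block m M c c' n); auto; try lra.
  split. rewrite Rminus_diag, phi_0; lra.
  rewrite Rplus_minus_l, phi_c; lra.
Qed.

Lemma hmap_zero c c' : 0 < c 1%Z -> hmap c c' 0 = 0.
Proof. intro. apply hmap_le1; auto; lra. Qed.

Lemma wd_scale ty e d L : 0 < L -> wd ty (e / L) (d / L) = wd ty e d / L.
Proof. intro. destruct ty as [|[|[|[|]]]]; simpl; try field; lra. Qed.

Lemma map_bas ty c c' h L : 1 <= L -> h 0 = 0 ->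
  (forall x y, x <= y -> 0 <= h y - h x <= L * (y - x)) ->
  (forall x y, x < y -> h x < h y) ->
  (forall n, (1 <= n)%Z -> h (IZR n) = IZR n /\ h (IZR n + c n) = IZR n + c' n) ->
  forall e' N' dl', okp e' N' dl' -> exists e N dl, okp e N dl /\
    forall x, Bas ty c e N dl x -> Bas ty c' e' N' dl' (h x).
Proof.
  intros HL H0 Hlip Hstr Hanc e' N' dl' [He [He' [HN Hd]]].
  exists (e' / L), N', (fun n => dl' n / L).
  assert (He2 : 0 < e' / L) by (apply Rdiv_lt_0_compat; lra).
  assert (He3 : e' / L <= e') by (apply Rmult_le_reg_r with L; [lra|]; replace (e' / L * L) with e' by (field; lra); nra).
  split.
  - repeat split; try lra; try lia.
    + apply Rdiv_lt_0_compat. apply Hd. lra.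
    + pose proof (Hd n). apply Rmult_le_reg_r with L. lra.
      replace (dl' n / L * L) with (dl' n) by (field; lra). nra.
  - assert (Eel : e' / L * L = e') by (field; lra).
    intros x [Hx|[n [Hn [H1 [H2 H3]]]]].
    + left. destruct (Rle_dec 0 x).
      * pose proof (Hlip 0 x r) as Hq. rewrite H0 in Hq. rewrite Rabs_pos_eq in Hx by lra.
        rewrite Rabs_pos_eq by lra. nra.
      * pose proof (Hlip x 0 ltac:(lra)) as Hq. rewrite H0 in Hq. rewrite Rabs_left in Hx by lra.
        rewrite Rabs_left1 by lra. nra.
    + destruct (Hanc n) as [A1 A2]. lia.
      right. exists n. split. auto. split.
      * destruct (Rle_dec (IZR n) x).
        -- pose proof (Hlip _ _ r). lra.
        -- pose proof (Hlip x (IZR n) ltac:(lra)). nra.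
      * split.
        -- destruct (Rle_dec x (IZR n + c n)).
           ++ destruct ty as [|ty'].
              ** simpl in *. assert (x < IZR n + c n) by lra. pose proof (Hstr _ _ H). lra.
              ** assert (0 < wd (S ty') e' (dl' n)).
                 { pose proof (Hd n). destruct ty' as [|[|[|]]]; simpl; lra. }
                 pose proof (Hlip _ _ r). lra.
           ++ pose proof (Hlip (IZR n + c n) x ltac:(lra)).
              rewrite wd_scale in H2 by lra.
              assert (Hq5 : x - (IZR n + c n) < wd ty e' (dl' n) / L) by lra.
              assert (L * (x - (IZR n + c n)) < wd ty e' (dl' n)).
              { apply Rmult_lt_compat_l with (r := L) in Hq5; [|lra].
                replace (L * (wd ty e' (dl' n) / L)) with (wd ty e' (dl' n)) in Hq5 by (field; lra). auto. }
              lra.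
        -- intros Ht E. apply H3; auto. rewrite <- A2 in E.
           destruct (Rtotal_order x (IZR n + c n)) as [G|[G|G]]; auto;
             apply Hstr in G; lra.
Qed.

Lemma eta_comp f L U : 0 < L -> (forall x y, Rabs (f x - f y) <= L * Rabs (x - y)) ->
  eta U -> eta (fun x => U (f x)).
Proof.
  intros HL Hf HU x Ux. destruct (HU _ Ux) as [e [He H]].
  exists (e / L). split. apply Rdiv_lt_0_compat; lra.
  intros y Hy. apply H. pose proof (Hf y x).
  assert (L * Rabs (y - x) < e).
  { apply Rmult_lt_compat_l with (r := L) in Hy; auto.
    replace (L * (e / L)) with e in Hy by (field; lra). auto. }
  lra.
Qed.

Lemma lip_abs f L : (forall x y, x <= y -> 0 <= f y - f x <= L * (y - x)) ->
  forall x y, Rabs (f x - f y) <= L * Rabs (x - y).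
Proof.
  intros H x y. destruct (Rle_dec x y).
  - pose proof (H x y r). rewrite Rabs_left1 by lra. rewrite Rabs_left1 by lra. lra.
  - pose proof (H y x ltac:(lra)). rewrite Rabs_pos_eq by lra. rewrite Rabs_pos_eq by lra. lra.
Qed.

Lemma Tt_homeo m M ty c c' : 0 < m <= M -> M < 1 -> cbd m M c -> cbd m M c' ->
  homeomorphic (Tt ty c) (Tt ty c').
Proof.
  intros Hm HM Hc Hc'.
  set (h := hmap c c'). set (g := hmap c' c). set (L := Lc m M).
  assert (HL : 1 <= L) by (apply Lc_ge1; auto).
  assert (Hgh : forall x, g (h x) = x) by (intro; apply (hmap_inv m M); auto).
  assert (Hhg : forall x, h (g x) = x) by (intro; apply (hmap_inv m M); auto).
  assert (Lh : forall x y, x <= y -> 0 <= h y - h x <= L * (y - x)) by (apply hmap_lip; auto).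
  assert (Lg : forall x y, x <= y -> 0 <= g y - g x <= L * (y - x)) by (apply hmap_lip; auto).
  assert (Sh : forall x y, x < y -> h x < h y).
  { intros x y Hxy. pose proof (Lh x y ltac:(lra)). destruct (Req_dec (h x) (h y)) as [E|E].
    - apply (f_equal g) in E. rewrite !Hgh in E. lra.
    - lra. }
  assert (Sg : forall x y, x < y -> g x < g y).
  { intros x y Hxy. pose proof (Lg x y ltac:(lra)). destruct (Req_dec (g x) (g y)) as [E|E].
    - apply (f_equal h) in E. rewrite !Hhg in E. lra.
    - lra. }
  assert (h0 : h 0 = 0) by (apply hmap_zero; pose proof (Hc 1%Z); lra).
  assert (g0 : g 0 = 0) by (apply hmap_zero; pose proof (Hc' 1%Z); lra).
  assert (Ah : forall n, (1 <= n)%Z -> h (IZR n) = IZR n /\ h (IZR n + c n) = IZR n + c' n)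
    by (intros; apply (hmap_anchor m M); auto).
  assert (Ag : forall n, (1 <= n)%Z -> g (IZR n) = IZR n /\ g (IZR n + c' n) = IZR n + c n)
    by (intros; apply (hmap_anchor m M); auto).
  exists h. split; [|split].
  - intros x y E. rewrite <- (Hgh x), <- (Hgh y), E. auto.
  - intro y. exists (g y). auto.
  - intro U. split.
    + intros [HU HU0]. split.
      * apply (eta_comp h L); auto. lra. apply lip_abs; auto.
      * intro U0. rewrite h0 in U0. destruct (HU0 U0) as [e' [N' [dl' [Hp HB]]]].
        destruct (map_bas ty c c' h L HL h0 Lh Sh Ah e' N' dl' Hp) as [e [N [dl [Hp2 HB2]]]].
        exists e, N, dl. split; auto.
    + intros [HU HU0]. split.
      * assert (eta (fun y => U (h (g y)))) by (apply (eta_comp g L (fun x => U (h x))); auto; [lra|apply lip_abs; auto]).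
        intros y Uy. destruct (H y) as [e [He Hb]]. rewrite Hhg; auto.
        exists e. split; auto. intros z Hz. specialize (Hb z Hz). rewrite Hhg in Hb. auto.
      * intro U0. assert (U (h 0)) by (rewrite h0; auto).
        destruct (HU0 H) as [e [N [dl [Hp HB]]]].
        destruct (map_bas ty c' c g L HL g0 Lg Sg Ag e N dl Hp) as [e' [N' [dl' [Hp2 HB2]]]].
        exists e', N', dl'. split; auto. intros y Hy. rewrite <- (Hhg y). apply HB, HB2, Hy.
Qed.

Definition psi (t x : R) : R :=
  if Rlt_dec x 1 then 2 - x else
  Rmin (1 / IZR (fl x) + Rmax 0 (x - IZR (fl x) - t)) (1 / (IZR (fl x) + 1) + (1 - (x - IZR (fl x)))).

Definition rho (t x : R) : R := Rmin (Rabs x) (psi t x).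
Definition dmet (t : R) (x y : R) : R := Rmin (Rabs (x - y)) (rho t x + rho t y).


Lemma Rabs_le_inv a b : Rabs a <= b -> - b <= a <= b.
Proof. intro H. pose proof (Rle_abs a). pose proof (Rle_abs (-a)). rewrite Rabs_Ropp in *. lra. Qed.

Lemma rmin_lip a b a' b' dd : Rabs (a - a') <= dd -> Rabs (b - b') <= dd ->
  Rabs (Rmin a b - Rmin a' b') <= dd.
Proof.
  intros H1 H2. apply Rabs_le. apply Rabs_le_inv in H1. apply Rabs_le_inv in H2.
  unfold Rmin. destruct (Rle_dec a b); destruct (Rle_dec a' b'); split; lra.
Qed.

Lemma rmax0_lip a a' : Rabs (Rmax 0 a - Rmax 0 a') <= Rabs (a - a').
Proof.
  unfold Rmax. destruct (Rle_dec 0 a); destruct (Rle_dec 0 a');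
  apply Rabs_le; pose proof (Rabs_pos (a - a')); pose proof (Rle_abs (a - a'));
  pose proof (Rle_abs (-(a - a'))); rewrite Rabs_Ropp in *; split; lra.
Qed.

Lemma psi_le1 t x : 0 < t -> x <= 1 -> psi t x = 2 - x.
Proof.
  intros Ht Hx. unfold psi. destruct (Rlt_dec x 1). auto.
  assert (x = 1) by lra. subst. replace 1 with (IZR 1) by auto. rewrite fl_IZR.
  simpl. rewrite Rminus_diag. unfold Rmax. destruct (Rle_dec 0 (0 - t)). lra.
  unfold Rmin. destruct (Rle_dec (1 / 1 + 0) (1 / (1 + 1) + (1 - 0))); lra.
Qed.

Lemma psi_block t k x : 0 < t <= 1/16 -> (1 <= k)%Z -> IZR k <= x <= IZR k + 1 ->
  psi t x = Rmin (1 / IZR k + Rmax 0 (x - IZR k - t)) (1 / (IZR k + 1) + (1 - (x - IZR k))).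
Proof.
  intros Ht Hk Hx. assert (Hk1 : 1 <= IZR k) by (apply IZR_le; auto).
  unfold psi. destruct (Rlt_dec x 1). lra.
  destruct (Req_dec x (IZR k + 1)) as [E|E].
  - assert (fl x = k + 1)%Z by (apply fl_unique; rewrite plus_IZR; simpl; lra).
    rewrite H, plus_IZR. simpl. rewrite E.
    replace (IZR k + 1 - (IZR k + 1)) with 0 by ring.
    replace (IZR k + 1 - IZR k) with 1 by ring.
    assert (1 / (IZR k + 1) < 1 / IZR k) by (apply Rmult_lt_reg_r with (IZR k * (IZR k + 1)); [nra|];
      replace (1 / (IZR k + 1) * (IZR k * (IZR k + 1))) with (IZR k) by (field; lra);
      replace (1 / IZR k * (IZR k * (IZR k + 1))) with (IZR k + 1) by (field; lra); lra).
    assert (0 < 1 / (IZR k + 1 + 1)) by (apply Rdiv_lt_0_compat; lra).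
    assert (1 / (IZR k + 1) < 1) by (apply mdiv_lt_l; lra).
    unfold Rmax. destruct (Rle_dec 0 (0 - t)); try lra. destruct (Rle_dec 0 (1 - t)); try lra.
    unfold Rmin. destruct (Rle_dec (1 / (IZR k + 1) + 0) (1 / (IZR k + 1 + 1) + (1 - 0)));
      destruct (Rle_dec (1 / IZR k + (1 - t)) (1 / (IZR k + 1) + (1 - 1))); lra.
  - assert (fl x = k) by (apply fl_unique; lra). rewrite H. auto.
Qed.

Lemma psi_lip t : 0 < t <= 1/16 -> forall x y, Rabs (psi t x - psi t y) <= Rabs (x - y).
Proof.
  intro Ht.
  assert (H : forall x y, x <= y -> Rabs (psi t y - psi t x) <= y - x).
  { apply block_ind.
    - intros x y z Hxyz H1 H2.
      replace (psi t z - psi t x) with ((psi t z - psi t y) + (psi t y - psi t x)) by ring.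
      eapply Rle_trans. apply Rabs_triang. lra.
    - intros x y Hxy. rewrite !psi_le1 by lra.
      replace (2 - y - (2 - x)) with (-(y - x)) by ring. rewrite Rabs_Ropp, Rabs_pos_eq; lra.
    - intros k x y Hk [Hxy Hy]. rewrite (psi_block t k x), (psi_block t k y); auto; try lra.
      apply rmin_lip.
      + replace (1 / IZR k + Rmax 0 (y - IZR k - t) - (1 / IZR k + Rmax 0 (x - IZR k - t)))
          with (Rmax 0 (y - IZR k - t) - Rmax 0 (x - IZR k - t)) by ring.
        eapply Rle_trans. apply rmax0_lip. rewrite Rabs_pos_eq; lra.
      + replace (1 / (IZR k + 1) + (1 - (y - IZR k)) - (1 / (IZR k + 1) + (1 - (x - IZR k))))
          with (- (y - x)) by ring. rewrite Rabs_Ropp, Rabs_pos_eq; lra. }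
  intros x y. destruct (Rle_dec x y).
  - rewrite Rabs_minus_sym. rewrite (Rabs_left1 (x - y)) by lra. specialize (H x y r). lra.
  - rewrite (Rabs_pos_eq (x - y)) by lra. apply H. lra.
Qed.

Lemma psi_pos t x : 0 < t <= 1/16 -> 0 < psi t x.
Proof.
  intro Ht. destruct (Rle_dec x 1). rewrite psi_le1; lra.
  assert (Hk : (1 <= fl x)%Z) by (apply fl_ge1; lra). pose proof (fl_spec x).
  assert (Hk1 : 1 <= IZR (fl x)) by (apply IZR_le; auto).
  rewrite (psi_block t (fl x) x); auto; try lra.
  assert (0 < 1 / IZR (fl x)) by (apply Rdiv_lt_0_compat; lra).
  assert (0 < 1 / (IZR (fl x) + 1)) by (apply Rdiv_lt_0_compat; lra).
  assert (0 <= Rmax 0 (x - IZR (fl x) - t)) by apply Rmax_l.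
  apply Rmin_pos; lra.
Qed.

Lemma rho_lip t : 0 < t <= 1/16 -> forall x y, Rabs (rho t x - rho t y) <= Rabs (x - y).
Proof.
  intros Ht x y. unfold rho. apply rmin_lip. apply Rabs_triang_inv2. apply psi_lip; auto.
Qed.

Lemma rho_nonneg t x : 0 < t <= 1/16 -> 0 <= rho t x.
Proof. intro. unfold rho. pose proof (psi_pos t x H). pose proof (Rabs_pos x).
  unfold Rmin; destruct (Rle_dec (Rabs x) (psi t x)); lra. Qed.

Lemma rho_le t x : rho t x <= Rabs x.
Proof. apply Rmin_l. Qed.

Lemma rho_zero t x : 0 < t <= 1/16 -> rho t x = 0 -> x = 0.
Proof.
  intros Ht H. unfold rho in H. pose proof (psi_pos t x Ht).
  unfold Rmin in H. destruct (Rle_dec (Rabs x) (psi t x)). 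
  - destruct (Req_dec x 0); auto. pose proof (Rabs_pos_lt x H1). lra.
  - lra.
Qed.

Lemma rho_0 t : 0 < t <= 1/16 -> rho t 0 = 0.
Proof. intro. pose proof (rho_nonneg t 0 H). pose proof (rho_le t 0). rewrite Rabs_R0 in *. lra. Qed.

Lemma dmet_0 t y : 0 < t <= 1/16 -> dmet t 0 y = rho t y.
Proof.
  intro Ht. unfold dmet. rewrite rho_0 by auto. rewrite Rminus_0_l, Rabs_Ropp, Rplus_0_l.
  pose proof (rho_le t y). unfold Rmin. destruct (Rle_dec (Rabs y) (rho t y)); lra.
Qed.

Lemma dmet_le t x y : dmet t x y <= Rabs (x - y).
Proof. apply Rmin_l. Qed.

Lemma dmet_metric t : 0 < t <= 1/16 -> is_metric (dmet t).
Proof.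
  intro Ht. split; [|split; [|split]].
  - intros x y. unfold dmet. pose proof (rho_nonneg t x Ht). pose proof (rho_nonneg t y Ht).
    pose proof (Rabs_pos (x - y)). unfold Rmin. destruct (Rle_dec (Rabs (x - y)) (rho t x + rho t y)); lra.
  - intros x y. split.
    + intro H. unfold dmet, Rmin in H. pose proof (rho_nonneg t x Ht). pose proof (rho_nonneg t y Ht).
      destruct (Rle_dec (Rabs (x - y)) (rho t x + rho t y)).
      * destruct (Req_dec x y); auto. assert (0 < Rabs (x - y)) by (apply Rabs_pos_lt; lra). lra.
      * assert (rho t x = 0) by lra. assert (rho t y = 0) by lra.
        apply rho_zero in H2; auto. apply rho_zero in H3; auto. subst. auto.
    + intro E. subst. unfold dmet. rewrite Rminus_diag, Rabs_R0. pose proof (rho_nonneg t y Ht).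
      unfold Rmin. destruct (Rle_dec 0 (rho t y + rho t y)); lra.
  - intros x y. unfold dmet. rewrite Rabs_minus_sym. rewrite (Rplus_comm (rho t x)). auto.
  - intros x y z. unfold dmet.
    pose proof (rho_nonneg t y Ht).
    pose proof (rho_lip t Ht x y). pose proof (rho_lip t Ht z y).
    apply Rabs_le_inv in H0. apply Rabs_le_inv in H1.
    assert (Rabs (x - z) <= Rabs (x - y) + Rabs (y - z)).
    { replace (x - z) with ((x - y) + (y - z)) by ring. apply Rabs_triang. }
    rewrite (Rabs_minus_sym z y) in H1.
    pose proof (Rabs_pos (x - y)). pose proof (Rabs_pos (y - z)).
    pose proof (Rabs_le_inv _ _ (Req_le _ _ (eq_refl (Rabs (x - y))))).
    assert (Hxy : rho t x <= rho t y + Rabs (x - y)).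
    { pose proof (rho_lip t Ht x y). apply Rabs_le_inv in H6. lra. }
    assert (Hzy : rho t z <= rho t y + Rabs (y - z)).
    { pose proof (rho_lip t Ht z y). apply Rabs_le_inv in H6. rewrite Rabs_minus_sym in H6. lra. }
    unfold Rmin.
    destruct (Rle_dec (Rabs (x - z)) (rho t x + rho t z));
    destruct (Rle_dec (Rabs (x - y)) (rho t x + rho t y));
    destruct (Rle_dec (Rabs (y - z)) (rho t y + rho t z)); lra.
Qed.

Lemma rho_small_bas t e : 0 < t <= 1/16 -> 0 < e ->
  exists e' N, okp e' N (fun _ => 1/16) /\ forall x, Bas 3 (ct t) e' N (fun _ => 1/16) x -> rho t x < e.
Proof.
  intros Ht He.
  set (e' := Rmin (1/8) (e/2)). set (N := Z.max 2 (up (2 / e))).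
  assert (He1 : 0 < e') by (apply Rmin_pos; lra).
  assert (He2 : e' <= 1/8) by apply Rmin_l. assert (He3 : e' <= e/2) by apply Rmin_r.
  exists e', N. split. repeat split; try lra; unfold N; lia.
  intros x [H|[n [Hn [H1 [H2 H3]]]]].
  - pose proof (rho_le t x). lra.
  - simpl in H2. unfold ct in H2.
    assert (Hn2 : 2 <= IZR n) by (apply IZR_le; unfold N in Hn; lia).
    assert (HnN : 2 / e < IZR n).
    { destruct (archimed (2 / e)) as [A _]. assert (IZR (up (2/e)) <= IZR n) by (apply IZR_le; unfold N in Hn; lia). lra. }
    assert (Hinv : 1 / IZR n < e / 2).
    { apply mdiv_lt_l. lra. assert (2 / e * e = 2) by (field; lra). nra. }
    pose proof (rho_le t x). unfold rho in *.
    assert (psi t x < e).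
    { destruct (Rle_dec (IZR n) x).
      - rewrite (psi_block t n x); auto; try lia; try lra.
        eapply Rle_lt_trans. apply Rmin_l. unfold Rmax. destruct (Rle_dec 0 (x - IZR n - t)); lra.
      - rewrite (psi_block t (n - 1) x); auto; try lia; rewrite ?minus_IZR; simpl; try lra.
        eapply Rle_lt_trans. apply Rmin_r.
        replace (IZR n - 1 + 1) with (IZR n) by ring. lra. }
    eapply Rle_lt_trans. apply Rmin_r. auto.
Qed.

Lemma rho_in_bas t e N dl : 0 < t <= 1/16 -> okp e N dl ->
  exists e', 0 < e' /\ forall x, rho t x < e' -> Bas 3 (ct t) e N dl x.
Proof.
  intros Ht [He [He' [HN Hd]]].
  assert (HN1 : 1 <= IZR N) by (apply IZR_le; auto).
  set (e' := Rmin e (1 / (IZR N + 1))).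
  assert (He1 : 0 < e') by (apply Rmin_pos; try lra; apply Rdiv_lt_0_compat; lra).
  assert (He2 : e' <= e) by apply Rmin_l. assert (He3 : e' <= 1 / (IZR N + 1)) by apply Rmin_r.
  assert (He4 : 1 / (IZR N + 1) <= 1/2).
  { apply Rmult_le_reg_r with (2 * (IZR N + 1)). lra.
    replace (1 / (IZR N + 1) * (2 * (IZR N + 1))) with 2 by (field; lra). lra. }
  exists e'. split; auto. intros x Hx. unfold rho, Rmin in Hx.
  destruct (Rle_dec (Rabs x) (psi t x)).
  - left. lra.
  - assert (Hp : psi t x < e') by lra. clear Hx.
    destruct (Rle_dec x 1). { rewrite psi_le1 in Hp; lra. }
    set (m := fl x). assert (Hm : (1 <= m)%Z) by (apply fl_ge1; lra).
    pose proof (fl_spec x) as [F1 F2]. fold m in F1, F2.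
    assert (Hm1 : 1 <= IZR m) by (apply IZR_le; auto).
    rewrite (psi_block t m x) in Hp; auto; try lra.
    unfold Rmin in Hp.
    destruct (Rle_dec (1 / IZR m + Rmax 0 (x - IZR m - t)) (1 / (IZR m + 1) + (1 - (x - IZR m)))).
    + assert (0 <= Rmax 0 (x - IZR m - t)) by apply Rmax_l.
      assert (x - IZR m - t <= Rmax 0 (x - IZR m - t)) by apply Rmax_r.
      assert (Hinv : 1 / IZR m < 1 / (IZR N + 1)) by lra.
      assert (IZR N + 1 < IZR m).
      { apply Rmult_lt_reg_r with (1 / IZR m * (1 / (IZR N + 1))).
        apply Rmult_lt_0_compat; apply Rdiv_lt_0_compat; lra.
        replace ((IZR N + 1) * (1 / IZR m * (1 / (IZR N + 1)))) with (1 / IZR m) by (field; lra).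
        replace (IZR m * (1 / IZR m * (1 / (IZR N + 1)))) with (1 / (IZR N + 1)) by (field; lra). lra. }
      assert (N <= m)%Z by (apply le_IZR; lra).
      assert (0 < 1 / IZR m) by (apply Rdiv_lt_0_compat; lra).
      right. exists m. split; auto. simpl. unfold ct. split. lra. split. lra. intro; discriminate.
    + assert (Hinv : 1 / (IZR m + 1) < 1 / (IZR N + 1)).
      { assert (0 < 1 / (IZR m + 1)) by (apply Rdiv_lt_0_compat; lra). lra. }
      assert (IZR N + 1 < IZR m + 1).
      { apply Rmult_lt_reg_r with (1 / (IZR m + 1) * (1 / (IZR N + 1))).
        apply Rmult_lt_0_compat; apply Rdiv_lt_0_compat; lra.
        replace ((IZR N + 1) * (1 / (IZR m + 1) * (1 / (IZR N + 1)))) with (1 / (IZR m + 1)) by (field; lra).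
        replace ((IZR m + 1) * (1 / (IZR m + 1) * (1 / (IZR N + 1)))) with (1 / (IZR N + 1)) by (field; lra). lra. }
      assert (N <= m + 1)%Z by (apply le_IZR; rewrite plus_IZR; simpl; lra).
      right. exists (m + 1)%Z. split; auto. simpl. unfold ct. rewrite plus_IZR. simpl.
      assert (0 < 1 / (IZR m + 1)) by (apply Rdiv_lt_0_compat; lra).
      split. lra. split. lra. intro; discriminate.
Qed.

Lemma T3_metric t : 0 < t <= 1/16 -> completely_metrizable (Tt 3 (ct t)).
Proof.
  intro Ht. exists (dmet t). split; [|split].
  - apply dmet_metric; auto.
  - intros u Hu. destruct (classic (forall eps, 0 < eps -> forall N, exists n, (N <= n)%nat /\ rho t (u n) < eps))
      as [Hc|Hc].
    + exists 0. intros e He. destruct (Hu (e/2) ltac:(lra)) as [N HN].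
      destruct (Hc (e/2) ltac:(lra) N) as [n [Hn Hr]]. exists N. intros k Hk.
      destruct (dmet_metric t Ht) as [_ [_ [Hs Htr]]].
      pose proof (Htr (u k) (u n) 0). rewrite (Hs (u n) 0), dmet_0 in H by auto.
      specialize (HN k n Hk Hn). lra.
    + assert (Hc2 : exists eps, 0 < eps /\ exists N, forall n, (N <= n)%nat -> eps <= rho t (u n)).
      { apply NNPP. intro H. apply Hc. intros eps Heps N. apply NNPP. intro H'. apply H.
        exists eps. split; auto. exists N. intros n Hn. apply Rnot_lt_le. intro H''. apply H'.
        exists n. auto. }
      destruct Hc2 as [eps [Heps [N0 HN0]]].
      assert (Hcc : Cauchy_crit u).
      { intros e He. destruct (Hu (Rmin e eps) ltac:(apply Rmin_pos; lra)) as [N HN].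
        exists (Nat.max N N0). intros n m Hn Hm. unfold R_dist.
        specialize (HN n m ltac:(lia) ltac:(lia)). pose proof (HN0 n ltac:(lia)). pose proof (HN0 m ltac:(lia)).
        pose proof (Rmin_l e eps). pose proof (Rmin_r e eps).
        unfold dmet, Rmin at 1 in HN. destruct (Rle_dec (Rabs (u n - u m)) (rho t (u n) + rho t (u m))); lra. }
      destruct (R_complete u Hcc) as [l Hl]. exists l. intros e He.
      destruct (Hl e He) as [N HN]. exists N. intros n Hn. specialize (HN n Hn). unfold R_dist in HN.
      pose proof (dmet_le t (u n) l). lra.
  - intro U. split.
    + intros [HU HU0] x Ux. destruct (Req_dec x 0) as [E|E].
      * subst. destruct (HU0 Ux) as [e [N [dl [Hp HB]]]].
        destruct (rho_in_bas t e N dl Ht Hp) as [e' [He' Hin]].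
        exists e'. split; auto. intros y Hy. rewrite dmet_0 in Hy by auto. apply HB, Hin, Hy.
      * destruct (HU x Ux) as [r [Hr Hb]].
        assert (Hrho : 0 < rho t x).
        { pose proof (rho_nonneg t x Ht). destruct (Req_dec (rho t x) 0). apply rho_zero in H0; auto; lra. lra. }
        exists (Rmin r (rho t x)). split. apply Rmin_pos; auto.
        intros y Hy. apply Hb. pose proof (Rmin_l r (rho t x)). pose proof (Rmin_r r (rho t x)).
        pose proof (rho_nonneg t y Ht).
        unfold dmet, Rmin at 1 in Hy. destruct (Rle_dec (Rabs (x - y)) (rho t x + rho t y)).
        -- rewrite Rabs_minus_sym. lra.
        -- lra.
    + intros HU. split.
      * intros x Ux. destruct (HU x Ux) as [e [He Hb]]. exists e. split; auto.
        intros y Hy. apply Hb. pose proof (dmet_le t x y). rewrite Rabs_minus_sym in H. lra.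
      * intro U0. destruct (HU 0 U0) as [e [He Hb]].
        destruct (rho_small_bas t e Ht He) as [e' [N [Hp Hin]]].
        exists e', N, (fun _ => 1/16). split; auto. intros x Hx. apply Hb. rewrite dmet_0 by auto. auto.
Qed.

Definition tmap (x : R) : R := 1/32 + cseq 0 x 0 / 8.
Definition T3f (x : R) : topo := Tt 3 (ct (tmap x)).
Definition K3f : topo -> Prop := fun T => exists x, T = T3f x.

Lemma tmap_bounds x : 0 < tmap x < 1/16.
Proof.
  unfold tmap, cseq. rewrite Rabs_R0, Rplus_0_r.
  destruct (frac_bound x 1 ltac:(lra)) as [_ [A B]]. lra.
Qed.

Lemma tmap_lt x y : x < y -> tmap x < tmap y.
Proof. intro H. unfold tmap. pose proof (cseq_lt_d 0 x y H 0%Z). lra. Qed.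

Lemma cseq_cbd x i : cbd (1/4) (3/4) (cseq (aX x) (Dk i (fl x))).
Proof. intro n. apply cseq_bounds. pose proof (aX_bounds x). lra. Qed.

Theorem theorem7 :
  exists K0 K1 K2 K3 : topo -> Prop,
    (forall t, K0 t -> in_L0 t) /\ (forall t, K1 t -> in_L0 t) /\
    (forall t, K2 t -> in_L0 t) /\ (forall t, K3 t -> in_L0 t) /\
    chain K0 /\ chain K1 /\ chain K2 /\ chain K3 /\
    card_c K0 /\ card_c K1 /\ card_c K2 /\ card_c K3 /\
    (forall t s, K0 t -> K0 s -> homeomorphic t s) /\
    (forall t s, K1 t -> K1 s -> homeomorphic t s) /\
    (forall t s, K2 t -> K2 s -> homeomorphic t s) /\
    (forall t s, K3 t -> K3 s -> homeomorphic t s) /\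
    (* (i) *)
    (forall t, K0 t -> second_countable t /\ ~ regular t) /\
    (* (ii) *)
    (forall t, K1 t -> ~ regular t /\ ~ first_countable t) /\
    (* (iii) *)
    (forall t, K2 t -> completely_normal t /\ ~ first_countable t) /\
    (* (iv) *)
    (forall t, K3 t -> completely_metrizable t) /\
    (* (v) *)
    chain (union3 K0 K1 K2) /\
    dense_in K0 (union3 K0 K1 K2) /\ dense_in K1 (union3 K0 K1 K2) /\
    dense_in K2 (union3 K0 K1 K2) /\
    (* (vi) *)
    (forall t s, union3 K0 K1 K2 t -> K3 s -> tsub t s).
Proof.
  exists (KU 0), (KU 1), (KU 2), K3f.
  assert (Hb : forall x i, forall m, 1/4 <= cseq (aX x) (Dk i (fl x)) m <= 3/4) by (intros; apply cseq_cbd).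
  split; [|split; [|split; [|split]]].
  { intros t [x E]. subst. apply Tt_L0. }
  { intros t [x E]. subst. apply Tt_L0. }
  { intros t [x E]. subst. apply Tt_L0. }
  { intros t [x E]. subst. apply Tt_L0. }
  split; [|split; [|split; [|split]]].
  { apply KU_chain; lia. }
  { apply KU_chain; lia. }
  { apply KU_chain; lia. }
  { intros X Y [x E1] [y E2]. subst. unfold T3f. destruct (Rle_dec (tmap x) (tmap y)).
    - right. apply T3_mono; auto.
    - left. apply T3_mono; lra. }
  split; [|split; [|split; [|split]]].
  { apply KU_card; lia. }
  { apply KU_card; lia. }
  { apply KU_card; lia. }
  { exists T3f. split. intro r. exists r; auto. split.
    - intros r s E. destruct (Rtotal_order r s) as [H|[H|H]]; auto.
      + exfalso. pose proof (tmap_lt r s H). pose proof (tmap_bounds r). pose proof (tmap_bounds s).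
        apply (T3_neq (tmap r) (tmap s)); auto; lra.
      + exfalso. pose proof (tmap_lt s r H). pose proof (tmap_bounds r). pose proof (tmap_bounds s).
        apply (T3_neq (tmap s) (tmap r)); auto; lra.
    - intros t [x E]. exists x. auto. }
  split; [|split; [|split; [|split]]].
  { intros t s [x E1] [y E2]. subst. apply (Tt_homeo (1/4) (3/4)); try lra; apply cseq_cbd. }
  { intros t s [x E1] [y E2]. subst. apply (Tt_homeo (1/4) (3/4)); try lra; apply cseq_cbd. }
  { intros t s [x E1] [y E2]. subst. apply (Tt_homeo (1/4) (3/4)); try lra; apply cseq_cbd. }
  { intros t s [x E1] [y E2]. subst. pose proof (tmap_bounds x). pose proof (tmap_bounds y).
    apply (Tt_homeo (Rmin (tmap x) (tmap y)) (1/16)).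
    - split. apply Rmin_pos; lra. pose proof (Rmin_l (tmap x) (tmap y)). lra.
    - lra.
    - intro n. unfold ct. split. apply Rmin_l. lra.
    - intro n. unfold ct. split. apply Rmin_r. lra. }
  split; [|split; [|split; [|split]]].
  { intros t [x E]. subst. split. apply Tt0_sc. apply Tt_not_regular; auto. }
  { intros t [x E]. subst. split. apply Tt_not_regular; auto. apply Tt_not_fc; auto. }
  { intros t [x E]. subst. split. apply Tt_cn; auto. apply Tt_not_fc; auto. }
  { intros t [x E]. subst. apply T3_metric. pose proof (tmap_bounds x). lra. }
  split; [|split; [|split; [|split]]].
  { apply union_chain. }
  { apply KU_dense; lia. }
  { apply KU_dense; lia. }
  { apply KU_dense; lia. }
  { intros t s Ht [y E]. subst. apply union_KU in Ht as [i [x [Hi E]]]. subst.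
    unfold Tu, T3f. apply T3_finer. lia. intro m. apply Hb. pose proof (tmap_bounds y). lra. }
Qed.
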